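(* Let $(p,q)$ be a piecewise elementary pair of partial isomorphisms of $\mathbb{QU}_{\prec}$ and suppose the triple $(p',q',w)$ liberates $p$ in $(p,q)$. Let $u$ be a reduced word that is either empty or of the form $u=t^nv$ ($n\neq0$, product reduced) such that $uw$ is reduced. Then there are partial isomorphisms $p''\supseteq p'$, $q''\supseteq q'$ of $\mathbb{QU}_{\prec}$ such that $(p'',q'',uw)$ liberates $p$ in $(p,q)$. The same holds with $p,q$ and $s,t$ interchanged (liberating $q$, with $u$ empty or $u=s^mv$, $m\ne0$).
   Context: $\mathbb{QU}_{\prec}$ is the Fraïssé limit of the class of finite ordered metric spaces (metric spaces with an arbitrary linear order) with rational distances; denote its linear order by $<$. A partial isomorphism of $\mathbb{QU}_{\prec}$ is an isometric order-preserving bijection $p$ between finite subsets $\mathrm{dom}(p),\mathrm{ran}(p)$; $p'\supseteq p$ means $p'$ extends $p$; intervals are taken with respect to $<$; $p|_I$ is the restriction of $p$ to $I\cap\mathrm{dom}(p)$; $\mathrm{Fix}(p)=\{c\in\mathrm{dom}(p):p(c)=c\}$. An open interval $(a,b)$ is $p$-increasing if $a,b\in\mathrm{dom}(p)$, $p(a)=a$, $p(b)=b$ and $p(c)>c$ for all $c\in\mathrm{dom}(p)\cap(a,b)$; $p$-decreasing likewise with $p(c)<c$; $p$-monotone means either. Writing $\mathrm{dom}(p)=\{a_0<\dots<a_n\}$, $p$ is informative if $p(a_0)=a_0$, $p(a_n)=a_n$ and there are indices $0=i_0<\dots<i_r=n$ with $p(a_{i_k})=a_{i_k}$ and each $(a_{i_k},a_{i_{k+1}})$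 $p$-monotone; then $\mathrm{Ess}(p)=(\mathrm{dom}(p)\cup\mathrm{ran}(p))\setminus\{a_0,a_n\}$. A pair $(p,q)$ is piecewise elementary if $p,q$ are informative, $\min\mathrm{dom}(p)=\min\mathrm{dom}(q)$ and $\max\mathrm{dom}(p)=\max\mathrm{dom}(q)$; it is elementary if moreover $\mathrm{Fix}(p)\cap\mathrm{Fix}(q)$ consists only of this min and max. Words: $F(s,t)$ free group; for reduced $w=t^{n_k}s^{m_k}\cdots t^{n_1}s^{m_1}$, $w(p,q)(c)=q^{n_k}p^{m_k}\cdots q^{n_1}p^{m_1}(c)$ when defined (rightmost letter acts first); ''$w=t^nv$'' means the product is reduced. Liberation for elementary pairs: a triple $(p',q',w)$ with $p'\supseteq p$, $q'\supseteq q$ partial isomorphisms and $w$ reduced liberates $p$ in $(p,q)$ if: (i) $p',q'$ are informative; (ii) $\min\mathrm{dom}(p')=\min\mathrm{dom}(p)$, $\min\mathrm{dom}(q')=\min\mathrm{dom}(q)$, $\max\mathrm{dom}(p')=\max\mathrm{dom}(p)$, $\max\mathrm{dom}(q')=\max\mathrm{dom}(q)$; (iii) $w=t^nv$ with $n\neq0$; (iv) $w(p',q')(c)$ is defined for all $c\in\mathrm{Ess}(p)\cup\mathrm{Ess}(q)$ and $w(p',q')(\min(\mathrm{Ess}(p)\cup\mathrm{Ess}(q)))>\max\mathrm{Ess}(p')$; (v) there is an open interval $J$ whose right endpoint is $\max\mathrm{dom}(q)$, with $w(p',q')(c)\in J$ for all $c\in\mathrm{Ess}(p)\cup\mathrm{Ess}(q)$,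 and $J$ is $q'$-increasing if $n>0$ and $q'$-decreasing if $n<0$. It liberates $q$ if the same holds with roles of $p,q$ and of $s,t$ interchanged. Liberation for piecewise elementary pairs: let $a_0<\dots<a_m$ enumerate $\mathrm{Fix}(p)\cap\mathrm{Fix}(q)$ and $I_j=[a_j,a_{j+1}]$; $(p',q',w)$ liberates $p$ [resp. $q$] in $(p,q)$ if the min/max conditions (ii) hold and for every $j<m$ the triple $(p'|_{I_j},q'|_{I_j},w)$ liberates $p|_{I_j}$ [resp. $q|_{I_j}$] in $(p|_{I_j},q|_{I_j})$. *)

(* Defs.v *)
From mathcomp Require Import all_boot all_order all_algebra.
Set Implicit Arguments. Unset Strict Implicit. Unset Printing Implicit Defensive.
Import Order.TTheory GRing.Theory Num.Theory.
Local Open Scope ring_scope.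

Section QUo.
Variables (M : eqType) (d : M -> M -> rat) (lt : rel M).

(** ** The ordered rational Urysohn space QU_< (characterised up to
    isomorphism as the countable structure with the extension property). *)
Definition is_rat_metric : Prop :=
  (forall x y, d x y = 0 <-> x = y) /\
  (forall x y, d x y = d y x) /\
  (forall x y z, d x z <= d x y + d y z).

Definition is_strict_linear_order : Prop :=
  (forall x, ~~ lt x x) /\
  (forall x y z, lt x y -> lt y z -> lt x z) /\
  (forall x y, x != y -> lt x y || lt y x).

(** one-point extension property: every abstract one-point extension
    (distances [r], position in the order given by the downward closed cut [L])
    of a finite subset [A] is realised in M. *)
Definition extension_property : Prop :=
  forall (A : seq M) (r : M -> rat) (L : pred M),
    (forall a, a \in A -> 0 < r a) ->
    (forall a b, a \in A -> b \in A -> d a b <= r a + r b /\ r a <= d a b + r b) ->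
    (forall a b, a \in A -> b \in A -> L a -> lt b a -> L b) ->
    exists x : M, forall a, a \in A -> d a x = r a /\ lt a x = L a.

Definition countable_type : Prop := exists f : nat -> M, forall x, exists n, f n = x.

Definition is_QUo : Prop :=
  [/\ is_rat_metric, is_strict_linear_order, extension_property & countable_type].

(** ** Partial isomorphisms, represented by their finite graphs. *)
Definition pgraph := seq (M * M).
Definition dom (p : pgraph) : seq M := map fst p.
Definition ran (p : pgraph) : seq M := map snd p.

Fixpoint papp (p : pgraph) (c : M) : option M :=
  match p with
  | [::] => None
  | (a, b) :: p' => if a == c then Some b else papp p' c
  end.

Definition pinv (p : pgraph) : pgraph := map (fun ab => (ab.2, ab.1)) p.

Definition partial_iso (p : pgraph) : Prop :=
  uniq (dom p) /\ uniq (ran p) /\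
  forall x1 y1 x2 y2, (x1, y1) \in p -> (x2, y2) \in p ->
    d x1 x2 = d y1 y2 /\ lt x1 x2 = lt y1 y2.

Definition pext (p' p : pgraph) : Prop := {subset p <= p'}.

Definition fixb (p : pgraph) (c : M) : bool := papp p c == Some c.

Definition is_dmin (p : pgraph) (a : M) : bool :=
  (a \in dom p) && all (fun c => (c == a) || lt a c) (dom p).
Definition is_dmax (p : pgraph) (a : M) : bool :=
  (a \in dom p) && all (fun c => (c == a) || lt c a) (dom p).

Definition same_min (p q : pgraph) : Prop := exists a, is_dmin p a /\ is_dmin q a.
Definition same_max (p q : pgraph) : Prop := exists a, is_dmax p a /\ is_dmax q a.

Definition p_increasing (p : pgraph) (a b : M) : Prop :=
  a \in dom p /\ b \in dom p /\ fixb p a /\ fixb p b /\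
  forall c, c \in dom p -> lt a c -> lt c b ->
    exists2 e, papp p c = Some e & lt c e.
Definition p_decreasing (p : pgraph) (a b : M) : Prop :=
  a \in dom p /\ b \in dom p /\ fixb p a /\ fixb p b /\
  forall c, c \in dom p -> lt a c -> lt c b ->
    exists2 e, papp p c = Some e & lt e c.
Definition p_monotone (p : pgraph) (a b : M) : Prop :=
  p_increasing p a b \/ p_decreasing p a b.

(** informative: the chosen fixed points a_{i_0} < ... < a_{i_r}, from
    min dom p to max dom p, with consecutive open intervals p-monotone *)
Definition informative (p : pgraph) : Prop :=
  exists (a0 : M) (s : seq M),
    is_dmin p a0 /\ is_dmax p (last a0 s) /\ fixb p a0 /\
    all (fun c => (c \in dom p) && fixb p c) s /\
    path lt a0 s /\
    (forall i, (i < size s)%N ->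
       p_monotone p (nth a0 (a0 :: s) i) (nth a0 s i)).

Definition ess (p : pgraph) (c : M) : bool :=
  ((c \in dom p) || (c \in ran p)) && ~~ is_dmin p c && ~~ is_dmax p c.

Definition piecewise_elementary (p q : pgraph) : Prop :=
  informative p /\ informative q /\ same_min p q /\ same_max p q.

Definition elementary (p q : pgraph) : Prop :=
  piecewise_elementary p q /\
  forall c, fixb p c -> fixb q c -> is_dmin p c || is_dmax p c.

(** ** Words of F(s,t) at the letter level: (false, _) = s, (true, _) = t;
    the second component is [true] for the inverse letter.  The head of the
    list is the leftmost letter (which acts last). *)
Definition letter := (bool * bool)%type.
Definition word := seq letter.

Definition reduced (w : word) : bool :=
  path (fun x y : letter => ~~ ((x.1 == y.1) && (x.2 != y.2))) (head (false, false) w) (behead w).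

Definition gpow (b : bool) (n : int) : word :=
  nseq `|n|%N (b, n < 0).
Definition tpow := gpow true.
Definition spow := gpow false.

Definition swapw (w : word) : word := map (fun x : letter => (~~ x.1, x.2)) w.

Definition act_letter (p q : pgraph) (x : letter) (c : M) : option M :=
  let r := if x.1 then q else p in papp (if x.2 then pinv r else r) c.

(** w(p,q)(c), rightmost letter first *)
Definition weval (w : word) (p q : pgraph) (c : M) : option M :=
  foldr (fun x acc => obind (act_letter p q x) acc) (Some c) w.

Definition restr (p : pgraph) (a b : M) : pgraph :=
  filter (fun xy => ((a == xy.1) || lt a xy.1) && ((xy.1 == b) || lt xy.1 b)) p.

Definition elib (p q p' q' : pgraph) (w : word) : Prop :=
  partial_iso p' /\ partial_iso q' /\ pext p' p /\ pext q' q /\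
  informative p' /\ informative q' /\
  same_min p' p /\ same_min q' q /\ same_max p' p /\ same_max q' q /\
  reduced w /\
  exists (n : int) (v : word), n != 0 /\ w = tpow n ++ v /\
  (forall c, ess p c || ess q c -> exists e, weval w p' q' c = Some e) /\
  (forall c0, ess p c0 || ess q c0 ->
     (forall c, ess p c || ess q c -> (c == c0) || lt c0 c) ->
     forall e0, weval w p' q' c0 = Some e0 ->
     forall x, ess p' x -> lt x e0) /\
  exists j1 j2, is_dmax q j2 /\
    (forall c e, ess p c || ess q c -> weval w p' q' c = Some e ->
       lt j1 e /\ lt e j2) /\
    (0 < n -> p_increasing q' j1 j2) /\ (n < 0 -> p_decreasing q' j1 j2).

Definition elib_q (p q p' q' : pgraph) (w : word) : Prop :=
  elib q p q' p' (swapw w).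

Definition consec_fix (p q : pgraph) (a b : M) : Prop :=
  fixb p a /\ fixb q a /\ fixb p b /\ fixb q b /\ lt a b /\
  forall c, fixb p c -> fixb q c -> ~ (lt a c /\ lt c b).

Definition liberates_p (p q p' q' : pgraph) (w : word) : Prop :=
  partial_iso p' /\ partial_iso q' /\ pext p' p /\ pext q' q /\
  same_min p' p /\ same_min q' q /\ same_max p' p /\ same_max q' q /\
  forall a b, consec_fix p q a b ->
    elib (restr p a b) (restr q a b) (restr p' a b) (restr q' a b) w.

Definition liberates_q (p q p' q' : pgraph) (w : word) : Prop :=
  partial_iso p' /\ partial_iso q' /\ pext p' p /\ pext q' q /\
  same_min p' p /\ same_min q' q /\ same_max p' p /\ same_max q' q /\
  forall a b, consec_fix p q a b ->
    elib_q (restr p a b) (restr q a b) (restr p' a b) (restr q' a b) w.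

End QUo.

(* Main.v *)
Require Import Defs.
From mathcomp Require Import all_boot all_order all_algebra.
From Stdlib Require Import Classical.
Set Implicit Arguments. Unset Strict Implicit. Unset Printing Implicit Defensive.
Import Order.TTheory GRing.Theory Num.Theory.
Local Open Scope ring_scope.

Section Main.
Variables (M : eqType) (d : M -> M -> rat) (lt : rel M).
Hypothesis HM : is_QUo d lt.

Lemma ltxx' x : ~~ lt x x.
Proof. by case: HM => _ [H [_ _]] _ _; apply: H. Qed.
Lemma ltT x y z : lt x y -> lt y z -> lt x z.
Proof. by case: HM => _ [_ [H _]] _ _; apply: H. Qed.
Lemma lt_tot x y : x != y -> lt x y || lt y x.
Proof. by case: HM => _ [_ [_ H]] _ _; apply: H. Qed.
Lemma lt_asym x y : lt x y -> ~~ lt y x.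
Proof. move=> h; apply/negP=> h'; by move: (ltxx' x); rewrite (ltT h h'). Qed.
Lemma lt_ne x y : lt x y -> x != y.
Proof. by move=> h; apply/eqP=> e; move: h; rewrite e (negbTE (ltxx' y)). Qed.
Lemma nlt_eqlt x y : ~~ lt x y -> (x == y) || lt y x.
Proof. move=> h; case: eqP => //= /eqP ne; by move: (lt_tot ne); rewrite (negbTE h). Qed.
Lemma lt_nlt x y : lt x y -> ~~ lt y x. Proof. exact: lt_asym. Qed.
Lemma nlt_trans x y z : ~~ lt y x -> lt y z -> lt x z.
Proof. move=> h; case/orP: (nlt_eqlt h) => [/eqP e|h1]; first by rewrite e.
  by move=> h2; apply: ltT h1 h2. Qed.
Lemma lt_nltT x y z : lt x y -> ~~ lt z y -> lt x z.
Proof. move=> h1 h; case/orP: (nlt_eqlt h) => [/eqP e|h2]; first by rewrite e.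
  by apply: ltT h1 h2. Qed.
Lemma nltT x y z : ~~ lt y x -> ~~ lt z y -> ~~ lt z x.
Proof. move=> h1 h2; case/orP: (nlt_eqlt h1) => [/eqP e|h3]; first by rewrite -e.
  case/orP: (nlt_eqlt h2) => [/eqP e|h4]; first by rewrite e; apply: lt_asym.
  by apply: lt_asym; apply: ltT h3 h4. Qed.
Lemma eqlt_nlt x y : (x == y) || lt x y -> ~~ lt y x.
Proof. by case/orP=> [/eqP ->|h]; [apply: ltxx'|apply: lt_asym]. Qed.

Lemma d_xx x : d x x = 0. Proof. by case: HM => [[H _]] _ _ _; apply/H. Qed.
Lemma d_eq0 x y : d x y = 0 -> x = y. Proof. by case: HM => [[H _]] _ _ _; move/H. Qed.
Lemma d_sym x y : d x y = d y x. Proof. by case: HM => [[_ [H _]]] _ _ _. Qed.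
Lemma d_tri x y z : d x z <= d x y + d y z. Proof. by case: HM => [[_ [_ H]]] _ _ _. Qed.
Lemma d_ge0 x y : 0 <= d x y.
Proof. have := d_tri x y x; rewrite d_xx (d_sym y x) -mulr2n.
  by rewrite -mulr_natl pmulr_rge0. Qed.
Lemma d_gt0 x y : x != y -> 0 < d x y.
Proof. move=> ne; rewrite lt_neqAle d_ge0 andbT; apply/eqP=> e.
  by move/eqP: ne; apply; apply: d_eq0. Qed.

Lemma papp_in (g : pgraph M) c e : papp g c = Some e -> (c, e) \in g.
Proof. elim: g => //= [[x y] g IH]; case: eqP => [-> [->]|_ /IH]; rewrite inE ?eqxx //.
  by move=> ->; rewrite orbT. Qed.
Lemma papp_dom (g : pgraph M) c e : papp g c = Some e -> c \in dom g.
Proof. by move/papp_in => h; apply/mapP; exists (c, e). Qed.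
Lemma in_papp (g : pgraph M) c e : uniq (dom g) -> (c, e) \in g -> papp g c = Some e.
Proof. elim: g => //= [[x y] g IH] /andP [nx u]; rewrite inE => /orP [/eqP [-> ->]|h].
    by rewrite eqxx.
  case: eqP => [ex|_]; last by apply: IH.
  by move: nx; rewrite ex (_ : c \in dom g) //; apply/mapP; exists (c, e). Qed.
Lemma papp_notin (g : pgraph M) c : c \notin dom g -> papp g c = None.
Proof. by case e: (papp g c) => [y|] // /negP []; apply: papp_dom e. Qed.
Lemma in_dom (g : pgraph M) x y : (x, y) \in g -> x \in dom g.
Proof. by move=> h; apply/mapP; exists (x, y). Qed.
Lemma in_ran (g : pgraph M) x y : (x, y) \in g -> y \in ran g.
Proof. by move=> h; apply/mapP; exists (x, y). Qed.
Lemma domP (g : pgraph M) x : x \in dom g -> exists y, (x, y) \in g.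
Proof. by case/mapP=> [[a b] h /= ->]; exists b. Qed.
Lemma ranP (g : pgraph M) y : y \in ran g -> exists x, (x, y) \in g.
Proof. by case/mapP=> [[a b] h /= ->]; exists a. Qed.
Lemma in_pinv (g : pgraph M) x y : ((x, y) \in pinv g) = ((y, x) \in g).
Proof. apply/mapP/idP => [[[a b] h [-> ->]] //|h]; by exists (y, x). Qed.
Lemma dom_pinv (g : pgraph M) : dom (pinv g) = ran g.
Proof. by rewrite /dom /ran /pinv -map_comp. Qed.
Lemma ran_pinv (g : pgraph M) : ran (pinv g) = dom g.
Proof. by rewrite /dom /ran /pinv -map_comp; apply: eq_map => -[]. Qed.
Lemma pinv_cat (g h : pgraph M) : pinv (g ++ h) = pinv g ++ pinv h.
Proof. exact: map_cat. Qed.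
Lemma pinvK (g : pgraph M) : pinv (pinv g) = g.
Proof. by rewrite /pinv -map_comp map_id_in // => -[]. Qed.

Lemma pi_pinv (g : pgraph M) : partial_iso d lt g -> partial_iso d lt (pinv g).
Proof. case=> [u1 [u2 H]]; split; first by rewrite dom_pinv.
  split; first by rewrite ran_pinv.
  move=> x1 y1 x2 y2; rewrite !in_pinv => h1 h2; have [e1 e2] := H _ _ _ _ h1 h2.
  by rewrite e1 e2. Qed.

Lemma pi_eq (g : pgraph M) x y x' y' : partial_iso d lt g -> (x, y) \in g -> (x', y') \in g ->
  (x == x') = (y == y').
Proof. case=> [_ [_ H]] h1 h2; have [e _] := H _ _ _ _ h1 h2.
  apply/eqP/eqP => [ex|ey]. by apply: d_eq0; rewrite -e ex d_xx.
  by apply: d_eq0; rewrite e ey d_xx. Qed.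
Lemma pi_lt (g : pgraph M) x y x' y' : partial_iso d lt g -> (x, y) \in g -> (x', y') \in g ->
  lt x x' = lt y y'.
Proof. by case=> [_ [_ H]] h1 h2; have [_ e] := H _ _ _ _ h1 h2. Qed.
Lemma pi_d (g : pgraph M) x y x' y' : partial_iso d lt g -> (x, y) \in g -> (x', y') \in g ->
  d x x' = d y y'.
Proof. by case=> [_ [_ H]] h1 h2; have [e _] := H _ _ _ _ h1 h2. Qed.
Lemma pi_udom (g : pgraph M) : partial_iso d lt g -> uniq (dom g). Proof. by case. Qed.
Lemma pi_uran (g : pgraph M) : partial_iso d lt g -> uniq (ran g). Proof. by case=> _ []. Qed.

Lemma pi_sub (g h : pgraph M) : partial_iso d lt h -> subseq g h -> partial_iso d lt g.
Proof. case=> [u1 [u2 H]] s; split; first by apply: subseq_uniq u1; apply: map_subseq.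
  split; first by apply: subseq_uniq u2; apply: map_subseq.
  by move=> x1 y1 x2 y2 h1 h2; apply: H; apply: (mem_subseq s). Qed.


Lemma ac1 (a b c e : rat) : a + (b + c) + e = (b + a) + (c + e).
Proof. by rewrite [b + a]addrC -!addrA. Qed.
Lemma ac2 (a b c : rat) : a + (b + c) = c + (a + b).
Proof. by rewrite [RHS]addrC -addrA. Qed.

Definition fmin (T : Type) (f : T -> rat) (v0 : rat) (l : seq T) :=
  foldr (fun t m => if f t <= m then f t else m) v0 l.
Lemma fmin_le (T : eqType) (f : T -> rat) v0 l :
  fmin f v0 l <= v0 /\ forall t, t \in l -> fmin f v0 l <= f t.
Proof. elim: l => [|t l [IH1 IH2]] /=; first by split.
  case: ifP => h; split.
  - by apply: le_trans IH1.
  - move=> t'; rewrite inE => /orP [/eqP ->//|/IH2]; by apply: le_trans.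
  - by [].
  - move=> t'; rewrite inE => /orP [/eqP ->|/IH2 //]. by apply: ltW; rewrite ltNge h.
Qed.
Lemma fmin_mem (T : eqType) (f : T -> rat) v0 l :
  fmin f v0 l = v0 \/ exists2 t, t \in l & fmin f v0 l = f t.
Proof. elim: l => [|t l IH] /=; first by left.
  case: ifP => _; first by right; exists t; rewrite ?inE ?eqxx.
  case: IH => [->|[t' h ->]]; [by left|right; exists t' => //; rewrite inE h orbT //]. Qed.

Definition ub (s : seq rat) := foldr (fun x acc => if acc <= x then x else acc) 0 s.
Lemma ub_ge s : 0 <= ub s /\ forall x, x \in s -> x <= ub s.
Proof. elim: s => [|y s [IH1 IH2]] /=; first by split.
  case: ifP => h; split.
  - by apply: le_trans h.
  - move=> x; rewrite inE => /orP [/eqP ->//|/IH2]; by move=> h'; apply: le_trans h' h.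
  - by [].
  - move=> x; rewrite inE => /orP [/eqP ->|/IH2 //]. by apply: ltW; rewrite ltNge h.
Qed.

Lemma extP (A : seq M) (r : M -> rat) (L : pred M) :
  (forall a, a \in A -> 0 < r a) ->
  (forall a b, a \in A -> b \in A -> d a b <= r a + r b /\ r a <= d a b + r b) ->
  (forall a b, a \in A -> b \in A -> L a -> lt b a -> L b) ->
  exists x : M, forall a, a \in A -> d a x = r a /\ lt a x = L a.
Proof. by case: HM => _ _ H _; apply: H. Qed.

Lemma FP (A : seq M) (L : pred M) :
  (forall a b, a \in A -> b \in A -> L a -> lt b a -> L b) ->
  exists f, [/\ f \notin A, (forall a1 a2, a1 \in A -> a2 \in A -> d a1 f = d a2 f) &
             forall a, a \in A -> lt a f = L a].
Proof. move=> HL.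
  set K := 1 + ub [seq d x y | x <- A, y <- A].
  have [u0 u1] := ub_ge [seq d x y | x <- A, y <- A].
  have Kp : 0 < K by rewrite /K ltr_pwDl.
  have Kd : forall a b, a \in A -> b \in A -> d a b <= K.
    move=> a b ha hb; apply: le_trans (u1 _ (allpairs_f _ ha hb)) _.
    by rewrite /K lerDr.
  have HT : forall a b, a \in A -> b \in A -> d a b <= K + K /\ K <= d a b + K.
    move=> a b ha hb; split.
      apply: le_trans (Kd _ _ ha hb) _; by rewrite lerDr ltW.
    by rewrite lerDr d_ge0.
  have [x Hx] := @extP A (fun _ => K) L (fun _ _ => Kp) HT HL.
  exists x; split.
  - apply/negP=> xA; have [e _] := Hx _ xA; by move: Kp; rewrite -e d_xx ltxx.
  - by move=> a1 a2 h1 h2; rewrite (Hx _ h1).1 (Hx _ h2).1.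
  - by move=> a ha; rewrite (Hx _ ha).2.
Qed.

Lemma SP (G : pgraph M) (A S : seq M) x b :
  partial_iso d lt G -> x \notin dom G -> (b, b) \in G -> lt x b -> x \in S ->
  (forall z w, (z, w) \in G -> lt x z -> forall s, s \in S -> lt s w) ->
  exists y, [/\ partial_iso d lt (G ++ [:: (x, y)]), y \notin A, y \notin ran G,
     (forall s, s \in S -> lt s y) & lt y b].
Proof. move=> piG xG bG xb xS HS.
  set A' := A ++ S ++ ran G ++ dom G.
  pose L := fun a => has (fun s => (a == s) || lt a s) (S ++ [seq pr.2 | pr <- G & lt pr.1 x]).
  pose f := fun a (pr : M * M) => d x pr.1 + d pr.2 a.
  pose r := fun a => fmin (f a) (f a (b, b)) G.
  have R1 : forall a z w, (z, w) \in G -> r a <= d x z + d w a.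
    by move=> a z w h; apply: (fmin_le (f a) (f a (b,b)) G).2 (z, w) h.
  have R2 : forall a, exists z w, (z, w) \in G /\ r a = d x z + d w a.
    move=> a; case: (fmin_mem (f a) (f a (b, b)) G) => [e|[[z w] h e]].
      by exists b, b; split; last exact: e.
    by exists z, w; split; last exact: e.
  have R3 : forall z w, (z, w) \in G -> r w = d x z.
    move=> z w h; apply/eqP; rewrite eq_le; apply/andP; split.
      by apply: le_trans (R1 w z w h) _; rewrite d_xx addr0.
    have [z' [w' [h' ->]]] := R2 w.
    rewrite -(pi_d piG h' h); exact: d_tri.
  have Rp : forall a, 0 < r a.
    move=> a; have [z [w [h ->]]] := R2 a; apply: ltr_pwDl; last exact: d_ge0.
    apply: d_gt0; apply/eqP=> e; by case/negP: xG; rewrite e; apply: in_dom h.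
  have HL : forall a1 a2, a1 \in A' -> a2 \in A' -> L a1 -> lt a2 a1 -> L a2.
    move=> a1 a2 _ _ /hasP [s hs hh] h21; apply/hasP; exists s => //.
    case/orP: hh => [/eqP <-|h1]; first by rewrite h21 orbT.
    by rewrite (ltT h21 h1) orbT.
  have HT : forall a1 a2, a1 \in A' -> a2 \in A' -> d a1 a2 <= r a1 + r a2 /\ r a1 <= d a1 a2 + r a2.
    move=> a1 a2 h1 h2; split.
      have [z1 [w1 [g1 ->]]] := R2 a1; have [z2 [w2 [g2 ->]]] := R2 a2.
      have t1 : d a1 a2 <= d a1 w1 + (d w1 w2 + d w2 a2).
        apply: le_trans (d_tri a1 w1 a2) _; rewrite lerD2l; exact: d_tri.
      have t2 : d w1 w2 <= d z1 x + d x z2 by rewrite -(pi_d piG g1 g2); exact: d_tri.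
      apply: le_trans t1 _; rewrite addrA.
      apply: le_trans (_ : d a1 w1 + (d z1 x + d x z2) + d w2 a2 <= _).
        by rewrite lerD2r lerD2l.
      by rewrite ac1 (d_sym a1) (d_sym z1).
    have [z [w [g ->]]] := R2 a2.
    apply: le_trans (R1 a1 z w g) _.
    rewrite addrCA lerD2l addrC (d_sym a1 a2); exact: d_tri.
  have [y Hy] := @extP A' r L (fun a _ => Rp a) HT HL.
  have yA : y \notin A'.
    apply/negP=> h; have [e _] := Hy _ h; by move: (Rp y); rewrite -e d_xx ltxx.
  have wA : forall z w, (z, w) \in G -> w \in A'.
    by move=> z w h; rewrite /A' !mem_cat (in_ran h) !orbT.
  have Lw : forall z w, (z, w) \in G -> L w = lt z x.
    move=> z w h; case: (boolP (lt z x)) => hzx.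
      apply/hasP; exists w; last by rewrite eqxx.
      rewrite mem_cat; apply/orP; right; apply/mapP; exists (z, w) => //.
      by rewrite mem_filter /= hzx.
    have hxz : lt x z.
      case/orP: (nlt_eqlt hzx) => // /eqP e; by case/negP: xG; rewrite -e; apply: in_dom h.
    apply/negP=> /hasP [s]; rewrite mem_cat => /orP [hs|/mapP [[z' w'] hf ->]] /=.
      have := HS _ _ h hxz _ hs => hsw /orP [/eqP e|hws].
        by move: hsw; rewrite e (negbTE (ltxx' _)).
      by move: (lt_asym hsw); rewrite hws.
    move: hf; rewrite mem_filter /= => /andP [hz' hf] /orP [/eqP e|hww].
      have := pi_eq piG h hf; rewrite e eqxx => /eqP ezz.
      by move: hz'; rewrite -ezz (negbTE hzx).
    have : lt z' z by apply: ltT hz' hxz.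
    rewrite (pi_lt piG hf h) => h'; by move: (lt_asym h'); rewrite hww.
  have Dw : forall z w, (z, w) \in G -> d w y = d x z.
    by move=> z w h; rewrite (Hy _ (wA _ _ h)).1 (R3 _ _ h).
  have Ow : forall z w, (z, w) \in G -> lt w y = lt z x.
    by move=> z w h; rewrite (Hy _ (wA _ _ h)).2 (Lw _ _ h).
  exists y; split.
  - case: piG => [u1 [u2 H]]; split.
      rewrite /dom map_cat cat_uniq u1 /= andbT orbF; exact: xG.
    split.
      rewrite /ran map_cat cat_uniq u2 /= andbT orbF; apply/negP=> h.
      by case/negP: yA; rewrite /A' !mem_cat h !orbT.
    move=> x1 y1 x2 y2; rewrite !mem_cat !inE.
    have nxz : forall z w, (z, w) \in G -> x != z.
      move=> z w h; apply/eqP=> e; by case/negP: xG; rewrite e; apply: in_dom h.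
    have nyw : forall z w, (z, w) \in G -> y != w.
      move=> z w h; apply/eqP=> e; case/negP: yA; rewrite e; exact: wA h.
    case/orP=> [h1|/eqP [-> ->]]; case/orP=> [h2|/eqP [-> ->]].
    + exact: H.
    + by rewrite (Dw _ _ h1) d_sym (Ow _ _ h1).
    + split; first by rewrite [d y y2]d_sym (Dw _ _ h2).
      apply/idP/idP => h.
        have := lt_asym h; rewrite -(Ow _ _ h2) => /nlt_eqlt /orP [/eqP e|//].
        by move: (nyw _ _ h2); rewrite e eqxx.
      have := lt_asym h; rewrite (Ow _ _ h2) => /nlt_eqlt /orP [/eqP e|//].
      by move: (nxz _ _ h2); rewrite e eqxx.
    + by rewrite !d_xx !(negbTE (ltxx' _)).
  - by apply/negP=> h; case/negP: yA; rewrite /A' mem_cat h.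
  - by apply/negP=> h; case/negP: yA; rewrite /A' !mem_cat h !orbT.
  - move=> s hs; have sA : s \in A' by rewrite /A' !mem_cat hs orbT.
    rewrite (Hy _ sA).2; apply/hasP; exists s; rewrite ?eqxx // mem_cat hs //.
  - have bA : b \in A' by rewrite /A' !mem_cat (in_ran bG) !orbT.
    have hb : lt b y = false.
      by rewrite (Ow _ _ bG) (negbTE (lt_asym xb)).
    case/orP: (nlt_eqlt (negbT hb)) => // /eqP e.
    by case/negP: yA; rewrite -e.
Qed.


Definition le x y := ~~ lt y x.
Lemma eqlt_le x y : ((x == y) || lt x y) = le x y.
Proof. apply/idP/idP; first exact: eqlt_nlt.
  move=> /nlt_eqlt /orP [/eqP ->|h]; by rewrite ?eqxx ?h ?orbT. Qed.
Lemma eqlt_le' x y : ((y == x) || lt x y) = le x y.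
Proof. by rewrite eq_sym eqlt_le. Qed.
Lemma leT x y z : le x y -> le y z -> le x z.
Proof. move=> h1 h2; exact: (nltT h1 h2). Qed.
Lemma le_ltT x y z : le x y -> lt y z -> lt x z.
Proof. move=> h1 h2; exact: (nlt_trans h1 h2). Qed.
Lemma lt_leT x y z : lt x y -> le y z -> lt x z.
Proof. move=> h1 h2; exact: (lt_nltT h1 h2). Qed.
Lemma ltW' x y : lt x y -> le x y. Proof. exact: lt_asym. Qed.
Lemma lexx' x : le x x. Proof. exact: ltxx'. Qed.

Definition pts (g : pgraph M) := dom g ++ ran g.

Definition gen (P Q : pgraph M) (l : letter) :=
  let r := if l.1 then Q else P in if l.2 then pinv r else r.
Definition under (P Q : pgraph M) (l : letter) := if l.1 then Q else P.
Definition other (P Q : pgraph M) (l : letter) := if l.1 then P else Q.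
Definition addl (P Q : pgraph M) (l : letter) (x y : M) :=
  let pr := if l.2 then (y, x) else (x, y) in
  if l.1 then (P, Q ++ [:: pr]) else (P ++ [:: pr], Q).

Lemma act_gen P Q l c : act_letter P Q l c = papp (gen P Q l) c. Proof. by []. Qed.

Lemma gen_add P Q l x y : gen (addl P Q l x y).1 (addl P Q l x y).2 l = gen P Q l ++ [:: (x, y)].
Proof. by case: l => [[] []]; rewrite /gen /addl /= ?pinv_cat. Qed.
Lemma other_add P Q l x y : other (addl P Q l x y).1 (addl P Q l x y).2 l = other P Q l.
Proof. by case: l => [[] []]. Qed.
Lemma under_add P Q l x y : under (addl P Q l x y).1 (addl P Q l x y).2 l =
  under P Q l ++ [:: if l.2 then (y, x) else (x, y)].
Proof. by case: l => [[] []]. Qed.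
Lemma gen_under P Q l : gen P Q l = if l.2 then pinv (under P Q l) else under P Q l.
Proof. by []. Qed.

Lemma pi_gen P Q l : partial_iso d lt P -> partial_iso d lt Q -> partial_iso d lt (gen P Q l).
Proof. by move=> hP hQ; rewrite /gen; case: l.1; case: l.2 => //; apply: pi_pinv. Qed.

Lemma mem_gen_sub (P Q P' Q' : pgraph M) l x y : pext P' P -> pext Q' Q ->
  (x, y) \in gen P Q l -> (x, y) \in gen P' Q' l.
Proof. rewrite /gen /pext => hP hQ; case: l.1; case: l.2; rewrite ?in_pinv; auto. Qed.

Lemma act_mem P Q l c e : partial_iso d lt P -> partial_iso d lt Q ->
  (act_letter P Q l c = Some e) <-> ((c, e) \in gen P Q l).
Proof. move=> hP hQ; rewrite act_gen; split; first exact: papp_in.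
  by apply: in_papp; apply: pi_udom; apply: pi_gen. Qed.

Lemma weval_cons (W : word) l (P Q : pgraph M) c :
  weval (l :: W) P Q c = obind (act_letter P Q l) (weval W P Q c).
Proof. by []. Qed.

Lemma weval_mono (W : word) (P Q P' Q' : pgraph M) c e :
  partial_iso d lt P -> partial_iso d lt Q -> partial_iso d lt P' -> partial_iso d lt Q' ->
  pext P' P -> pext Q' Q -> weval W P Q c = Some e -> weval W P' Q' c = Some e.
Proof. move=> hP hQ hP' hQ' sP sQ; elim: W e => [|l W IH] e //=.
  case h: (weval W P Q c) => [e'|] //= ha; rewrite (IH _ h) /=.
  apply/(act_mem _ _ _ hP' hQ'); apply: mem_gen_sub sP sQ _.
  by apply/(act_mem _ _ _ hP hQ). Qed.

Lemma weval_lt (W : word) (P Q : pgraph M) c c' e e' :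
  partial_iso d lt P -> partial_iso d lt Q ->
  weval W P Q c = Some e -> weval W P Q c' = Some e' -> lt c c' -> lt e e'.
Proof. move=> hP hQ; elim: W e e' => [|l W IH] e e' /=; first by move=> [<-] [<-].
  case h: (weval W P Q c) => [x|] //=; case h': (weval W P Q c') => [x'|] //= ha ha' hc.
  move/(act_mem _ _ _ hP hQ): ha => ha; move/(act_mem _ _ _ hP hQ): ha' => ha'.
  by rewrite -(pi_lt (pi_gen l hP hQ) ha ha'); apply: IH h h' hc. Qed.

Lemma weval_in (l : letter) (W : word) (P Q : pgraph M) c e :
  weval (l :: W) P Q c = Some e -> e \in pts P ++ pts Q.
Proof. rewrite weval_cons; case: (weval W P Q c) => [x|] //= /papp_in.
  rewrite /gen /pts !mem_cat; case: l.1; case: l.2; rewrite ?in_pinv => /=.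
  - by move/in_dom => ->; rewrite !orbT.
  - by move/in_ran => ->; rewrite !orbT.
  - by move/in_dom => ->.
  - by move/in_ran => ->; rewrite !orbT. Qed.


Lemma mem_restr (g : pgraph M) a b x y :
  ((x, y) \in restr lt g a b) = [&& (x, y) \in g, le a x & le x b].
Proof. by rewrite /restr mem_filter /= eqlt_le eqlt_le andbC andbA. Qed.
Lemma pi_restr (g : pgraph M) a b : partial_iso d lt g -> partial_iso d lt (restr lt g a b).
Proof. by move=> h; apply: pi_sub h _; apply: filter_subseq. Qed.
Lemma pext_restr (g g' : pgraph M) a b : pext g' g -> pext (restr lt g' a b) (restr lt g a b).
Proof. move=> h [x y]; rewrite !mem_restr => /and3P [h1 h2 h3]; by rewrite (h _ h1) h2 h3. Qed.
Lemma pext_restr1 (g : pgraph M) a b : pext g (restr lt g a b).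
Proof. by move=> [x y]; rewrite mem_restr => /andP []. Qed.

Lemma pi_fix_le (g : pgraph M) a x y : partial_iso d lt g -> (a, a) \in g -> (x, y) \in g ->
  (le a x = le a y) /\ (le x a = le y a) /\ (lt a x = lt a y) /\ (lt x a = lt y a).
Proof. move=> h ha hx; rewrite /le (pi_lt h hx ha) (pi_lt h ha hx); by []. Qed.

Lemma gen_restr (P Q : pgraph M) l a b x y :
  partial_iso d lt P -> partial_iso d lt Q -> (a, a) \in P -> (b, b) \in P ->
  (a, a) \in Q -> (b, b) \in Q ->
  (x, y) \in gen P Q l -> le a x -> le x b ->
  [/\ (x, y) \in gen (restr lt P a b) (restr lt Q a b) l, le a y & le y b].
Proof. move=> hP hQ aP bP aQ bQ.
  have H : forall g, partial_iso d lt g -> (a, a) \in g -> (b, b) \in g ->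
     forall x y, (x, y) \in g -> le a x -> le x b ->
     [/\ (x, y) \in restr lt g a b, le a y & le y b].
    move=> g hg ag bg x' y' h h1 h2.
    have [e1 _] := pi_fix_le hg ag h; have [_ [e2 _]] := pi_fix_le hg bg h.
    by rewrite mem_restr h h1 h2 -e1 -e2.
  have H' : forall g, partial_iso d lt g -> (a, a) \in g -> (b, b) \in g ->
     forall x y, (y, x) \in g -> le a x -> le x b ->
     [/\ (y, x) \in restr lt g a b, le a y & le y b].
    move=> g hg ag bg x' y' h h1 h2.
    have [e1 _] := pi_fix_le hg ag h; have [_ [e2 _]] := pi_fix_le hg bg h.
    by rewrite mem_restr h e1 e2 h1 h2.
  rewrite /gen; case: l.1; case: l.2; rewrite ?in_pinv; [exact: H'|exact: H|exact: H'|exact: H].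
Qed.

Lemma weval_restr (W : word) (P Q : pgraph M) a b c e :
  partial_iso d lt P -> partial_iso d lt Q -> (a, a) \in P -> (b, b) \in P ->
  (a, a) \in Q -> (b, b) \in Q -> le a c -> le c b ->
  weval W P Q c = Some e ->
  [/\ weval W (restr lt P a b) (restr lt Q a b) c = Some e, le a e & le e b].
Proof. move=> hP hQ aP bP aQ bQ hc1 hc2; elim: W e => [|l W IH] e /=; first by move=> [<-].
  case h: (weval W P Q c) => [x|] //= ha.
  have [h1 h2 h3] := IH _ h; rewrite h1 /=.
  move/(act_mem _ _ _ hP hQ): ha => ha.
  have [g1 g2 g3] := gen_restr hP hQ aP bP aQ bQ ha h2 h3; split => //.
  apply/(act_mem _ _ _ (pi_restr a b hP) (pi_restr a b hQ)); exact: g1.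
Qed.

Lemma weval_unrestr (W : word) (P Q : pgraph M) a b c e :
  partial_iso d lt P -> partial_iso d lt Q ->
  weval W (restr lt P a b) (restr lt Q a b) c = Some e -> weval W P Q c = Some e.
Proof. move=> hP hQ; apply: (weval_mono (pi_restr a b hP) (pi_restr a b hQ) hP hQ (@pext_restr1 P a b) (@pext_restr1 Q a b)). Qed.

Lemma path_gt a s x : path lt a s -> x \in s -> lt a x.
Proof. move=> h hx; have := order_path_min (fun y x z => @ltT x y z) h; by move/allP/(_ _ hx). Qed.
Lemma path_le_last a s x : path lt a s -> x \in a :: s -> le x (last a s).
Proof. elim: s a x => [|c s IH] a x /=; first by rewrite inE => _ /eqP ->; apply: lexx'.
  move=> /andP [h1 h2]; rewrite inE => /orP [/eqP ->|hx]; last exact: IH.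
  apply: leT (ltW' h1) _; apply: IH => //; exact: mem_head. Qed.

Fixpoint chain_ok (R : M -> M -> Prop) (a : M) (s : seq M) : Prop :=
  if s is c :: s' then R a c /\ chain_ok R c s' else True.

Lemma chain_nth R a s : chain_ok R a s <->
  forall i, (i < size s)%N -> R (nth a (a :: s) i) (nth a s i).
Proof. elim: s a => [|c s IH] a /=; first by split.
  split.
    move=> [h1 /IH h2] [|i] //= hi.
    have e1 : nth a (c :: s) i = nth c (c :: s) i.
      by apply: set_nth_default; apply: leq_trans hi (leqnSn _).
    have e2 : nth a s i = nth c s i by apply: set_nth_default.
    by rewrite e1 e2; apply: h2.
  move=> h; split; first exact: (h 0%N).
  apply/IH => i hi; have := h i.+1 hi => /=.
  have e1 : nth a (c :: s) i = nth c (c :: s) i.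
    by apply: set_nth_default; apply: leq_trans hi (leqnSn _).
  have e2 : nth a s i = nth c s i by apply: set_nth_default.
  by rewrite e1 e2.
Qed.

Definition INC (g : pgraph M) j b := forall z w, (z, w) \in g -> lt j z -> lt z b -> lt z w.
Definition DEC (g : pgraph M) j b := forall z w, (z, w) \in g -> lt j z -> lt z b -> lt w z.
Definition Mono (g : pgraph M) c c' := [/\ (c, c) \in g, (c', c') \in g & INC g c c' \/ DEC g c c'].
Definition CH (g : pgraph M) a b j :=
  exists s, [/\ path lt a s, last a s = b, chain_ok (Mono g) a s & j \in a :: s].

Lemma inc_pinv (g : pgraph M) j b : partial_iso d lt g -> (j, j) \in g -> (b, b) \in g ->
  INC (pinv g) j b <-> DEC g j b.
Proof. move=> h hj hb; split.
  - move=> H z w hz h1 h2; apply: H; rewrite ?in_pinv //.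
      by have [_ [_ [<- _]]] := pi_fix_le h hj hz.
    by have [_ [_ [_ <-]]] := pi_fix_le h hb hz.
  - move=> H z w; rewrite in_pinv => hz h1 h2; apply: H => //.
      by have [_ [_ [-> _]]] := pi_fix_le h hj hz.
    by have [_ [_ [_ ->]]] := pi_fix_le h hb hz.
Qed.

Lemma gen_dir (P Q : pgraph M) l j b : partial_iso d lt (under P Q l) ->
  (j, j) \in under P Q l -> (b, b) \in under P Q l ->
  INC (gen P Q l) j b <-> (if l.2 then DEC (under P Q l) j b else INC (under P Q l) j b).
Proof. rewrite gen_under; case: l.2 => //; exact: inc_pinv. Qed.

Lemma split_chain (R R' : M -> M -> Prop) a s b f :
  path lt a s -> last a s = b -> f \notin a :: s -> lt a f -> lt f b ->
  (forall c c', R c c' -> ~~ (lt c f && lt f c') -> R' c c') ->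
  (forall c c', R c c' -> lt c f -> lt f c' -> le c' b -> R' c f /\ R' f c') ->
  chain_ok R a s ->
  exists s', [/\ path lt a s', last a s' = b, chain_ok R' a s' & f \in s'].
Proof. move=> + + + + + H1 H2; elim: s a => [|c s IH] a /=.
    move=> _ -> _ h1 h2; by move: (lt_asym h1); rewrite h2.
  move=> /andP [hac hp] hl; rewrite !inE negb_or => /andP [fa]; rewrite negb_or => /andP [fc fs] haf hfb [Rac hch].
  have [hfc|hcf] := orP (lt_tot fc).
    exists [:: f, c & s]; split => //=.
    - by rewrite haf hfc hp.
    - have Hl : le c b by rewrite -hl; apply: path_le_last hp (mem_head _ _).
      have [r1 r2] := H2 _ _ Rac haf hfc Hl; split => //; split => //.
      have : forall a', path lt a' s -> lt f a' -> chain_ok R a' s -> chain_ok R' a' s.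
        elim: (s) => [|c' s' IH'] a' //= /andP [h1 h2] h3 [h4 h5]; split.
          apply: (H1 _ _ h4); by rewrite (negbTE (lt_asym h3)).
        by apply: IH' => //; apply: ltT h3 h1.
      by apply.
    - by rewrite !inE eqxx.
  have fcs : f \notin c :: s by rewrite inE negb_or fc fs.
  have [s' [p1 p2 p3 p4]] := IH c hp hl fcs hcf hfb hch.
  exists (c :: s'); split => //=.
  - by rewrite hac p1.
  - split => //; apply: (H1 _ _ Rac); by rewrite (negbTE (lt_asym hcf)) andbF.
  - by rewrite inE p4 orbT.
Qed.

Lemma INC_narrow (g : pgraph M) j b c c' : INC g j b -> le j c -> le c' b -> INC g c c'.
Proof. move=> H h1 h2 z w hz hc hc'; apply: (H _ _ hz); [exact: le_ltT h1 hc|exact: lt_leT hc' h2]. Qed.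
Lemma DEC_narrow (g : pgraph M) j b c c' : DEC g j b -> le j c -> le c' b -> DEC g c c'.
Proof. move=> H h1 h2 z w hz hc hc'; apply: (H _ _ hz); [exact: le_ltT h1 hc|exact: lt_leT hc' h2]. Qed.
Lemma INC_add (g : pgraph M) pr c c' : INC g c c' -> ~~ (lt c pr.1 && lt pr.1 c') -> INC (g ++ [:: pr]) c c'.
Proof. move=> H hn z w; rewrite mem_cat inE => /orP [hz|/eqP e]; first exact: H.
  by move: hn; rewrite -e /= => /negP hn h1 h2; case: hn; rewrite h1 h2. Qed.
Lemma DEC_add (g : pgraph M) pr c c' : DEC g c c' -> ~~ (lt c pr.1 && lt pr.1 c') -> DEC (g ++ [:: pr]) c c'.
Proof. move=> H hn z w; rewrite mem_cat inE => /orP [hz|/eqP e]; first exact: H.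
  by move: hn; rewrite -e /= => /negP hn h1 h2; case: hn; rewrite h1 h2. Qed.

Lemma chain_add (g : pgraph M) pr a s b j :
  path lt a s -> last a s = b -> (j \in a :: s \/ le j a) ->
  (INC (g ++ [:: pr]) j b \/ DEC (g ++ [:: pr]) j b) -> lt j pr.1 -> lt pr.1 b ->
  chain_ok (Mono g) a s -> chain_ok (Mono (g ++ [:: pr])) a s.
Proof. move=> + + + Hd hj hb; elim: s a => [|c s IH] a //=.
  move=> /andP [hac hp] hl hjm [[m1 m2 m3] hch]; split; last first.
    apply: IH => //; case: hjm => [hm|h].
      move: hm; rewrite inE => /orP [/eqP ->|hm]; [by right; apply: ltW'|by left].
    by right; apply: leT h (ltW' hac).
  split; rewrite ?mem_cat ?m1 ?m2 //.
  case hin: (lt a pr.1 && lt pr.1 c); last first.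
    case: m3 => h; [left; apply: INC_add h _|right; apply: DEC_add h _]; by rewrite hin.
  have hja : le j a.
    case: hjm => [hm|//]; move: hm; rewrite inE => /orP [/eqP ->|hj']; first exact: lexx'.
    have hcj : le c j.
      move: hj'; rewrite inE => /orP [/eqP ->|hj']; first exact: lexx'.
      exact: ltW' (path_gt hp hj').
    move/andP: hin => [_ h2]; have := le_ltT hcj (ltT hj h2).
    by rewrite (negbTE (ltxx' _)).
  have hcb : le c b by rewrite -hl; apply: path_le_last hp (mem_head _ _).
  case: Hd => h; [left; apply: INC_narrow h hja hcb|right; apply: DEC_narrow h hja hcb].
Qed.


Lemma chain_impl (R1 R2 : M -> M -> Prop) a s :
  (forall c c', c \in a :: s -> c' \in a :: s -> R1 c c' -> R2 c c') ->
  chain_ok R1 a s -> chain_ok R2 a s.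
Proof. elim: s a => [|c s IH] a //= H [h1 h2]; split.
    by apply: H h1; rewrite !inE eqxx ?orbT.
  apply: IH h2 => x y hx hy h; by apply: H h; rewrite inE ?hx ?hy orbT. Qed.

Lemma chain_fix (g : pgraph M) a s x : chain_ok (Mono g) a s -> x \in s -> (x, x) \in g.
Proof. elim: s a => [|c s IH] a //= [[_ h _] h2]; rewrite inE => /orP [/eqP ->//|]; by move=> hx; apply: (IH _ h2 hx). Qed.

Lemma CH_props (g : pgraph M) a b j : (a, a) \in g -> CH g a b j ->
  [/\ (j, j) \in g, (b, b) \in g, le a j, le j b & le a b].
Proof. move=> ha [s [hp hl hc hj]].
  have fx : forall x, x \in a :: s -> (x, x) \in g.
    move=> x; rewrite inE => /orP [/eqP ->//|]; by move=> hh; apply: (chain_fix hc hh).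
  have lo : forall x, x \in a :: s -> le a x.
    move=> x; rewrite inE => /orP [/eqP ->|/(path_gt hp) /ltW' //]; exact: lexx'.
  have hi : forall x, x \in a :: s -> le x b by move=> x hx; rewrite -hl; exact: path_le_last.
  have hb : b \in a :: s by rewrite -hl mem_last.
  split; auto; by apply: hi; rewrite mem_head. Qed.

Lemma CH_a (g : pgraph M) a b j : CH g a b j -> CH g a b a.
Proof. by case=> s [h1 h2 h3 _]; exists s; split => //; rewrite mem_head. Qed.

Lemma CH_inform (g : pgraph M) a b j : partial_iso d lt g -> (a, a) \in g -> CH g a b j ->
  informative lt (restr lt g a b).
Proof. move=> pg ha hC; have [_ hb _ _ hab] := CH_props ha hC.
  case: hC => s [hp hl hc hj].
  have lo : forall x, x \in a :: s -> le a x.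
    move=> x; rewrite inE => /orP [/eqP ->|/(path_gt hp) /ltW' //]; exact: lexx'.
  have hi : forall x, x \in a :: s -> le x b by move=> x hx; rewrite -hl; exact: path_le_last.
  have fx : forall x, x \in a :: s -> (x, x) \in restr lt g a b.
    move=> x hx; rewrite mem_restr lo // hi // !andbT.
    move: hx; rewrite inE => /orP [/eqP ->//|]; by move=> hh; apply: (chain_fix hc hh).
  have pR := pi_restr a b pg.
  have fixR : forall x, x \in a :: s -> fixb (restr lt g a b) x.
    by move=> x hx; rewrite /fixb (in_papp (pi_udom pR) (fx _ hx)).
  have domR : forall x, x \in dom (restr lt g a b) -> le a x && le x b.
    by move=> x /domP [y]; rewrite mem_restr => /and3P [_ -> ->].
  exists a, s; split; [|split; [|split; [|split; [|split]]]].
  - rewrite /is_dmin; apply/andP; split; first exact: in_dom (fx _ (mem_head _ _)).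
    apply/allP => x /domR /andP [h _]; by rewrite eqlt_le'.
  - have hbs : b \in a :: s by rewrite -hl mem_last.
    rewrite /is_dmax hl; apply/andP; split; first exact: in_dom (fx _ hbs).
    apply/allP => x /domR /andP [_ h]; by rewrite eqlt_le.
  - by apply: fixR; rewrite mem_head.
  - by apply/allP => x hx; rewrite (in_dom (fx x _)) ?fixR // inE hx orbT.
  - exact: hp.
  - apply/chain_nth; apply: chain_impl hc => c c' hc1 hc2 [m1 m2 m3].
    have dir : forall (P : M -> M -> bool),
        (forall z w, (z, w) \in g -> lt c z -> lt z c' -> P z w) ->
        forall z, z \in dom (restr lt g a b) -> lt c z -> lt z c' ->
        exists2 e, papp (restr lt g a b) z = Some e & P z e.
      move=> P H z /domP [e he] h1 h2; exists e; first exact: in_papp (pi_udom pR) he.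
      by apply: H h1 h2; move: he; rewrite mem_restr => /andP [].
    case: m3 => hm; [left|right]; (split; [|split; [|split; [|split]]]);
      rewrite ?(in_dom (fx _ hc1)) ?(in_dom (fx _ hc2)) ?fixR //.
      by apply: (dir (fun z w => lt z w)) => z w hz h1 h2; apply: (hm _ _ hz h1 h2).
    by apply: (dir (fun z w => lt w z)) => z w hz h1 h2; apply: (hm _ _ hz h1 h2).
Qed.

Lemma inform_CH (g : pgraph M) a b : partial_iso d lt g -> (a, a) \in g -> (b, b) \in g -> lt a b ->
  informative lt (restr lt g a b) -> CH g a b a.
Proof. move=> pg ha hb hab [a0 [s [hmin [hmax [hfa [hall [hp hmon]]]]]]].
  have pR := pi_restr a b pg.
  have aR : (a, a) \in restr lt g a b by rewrite mem_restr ha lexx' ltW'.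
  have bR : (b, b) \in restr lt g a b by rewrite mem_restr hb lexx' ltW'.
  have domR : forall x, x \in dom (restr lt g a b) -> le a x && le x b.
    by move=> x /domP [y]; rewrite mem_restr => /and3P [_ -> ->].
  have ea : a0 = a.
    move/andP: hmin => [h0 /allP /(_ _ (in_dom aR))] /orP [/eqP //|h].
    by move: (domR _ h0) => /andP [h1 _]; move: h1; rewrite /le h.
  have eb : last a0 s = b.
    move/andP: hmax => [h0 /allP /(_ _ (in_dom bR))] /orP [/eqP //|h].
    by move: (domR _ h0) => /andP [_ h1]; move: h1; rewrite /le h.
  subst a0; exists s; split => //; last by rewrite mem_head.
  move/chain_nth: hmon => hmon; apply: chain_impl hmon => c c' _ _ hm.
  have gen1 : forall x, x \in dom (restr lt g a b) -> fixb (restr lt g a b) x -> (x, x) \in g.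
    by move=> x _ /eqP /papp_in; rewrite mem_restr => /andP [].
  have conv : forall (P : M -> M -> bool), c \in dom (restr lt g a b) -> c' \in dom (restr lt g a b) ->
      (forall z, z \in dom (restr lt g a b) -> lt c z -> lt z c' ->
        exists2 e, papp (restr lt g a b) z = Some e & P z e) ->
      forall z w, (z, w) \in g -> lt c z -> lt z c' -> P z w.
    move=> P hc hc' H z w hz h1 h2.
    have zR : (z, w) \in restr lt g a b.
      move/domR/andP: hc => [hc _]; move/domR/andP: hc' => [_ hc'].
      by rewrite mem_restr hz (ltW' (le_ltT hc h1)) (ltW' (lt_leT h2 hc')).
    have [e he hP] := H z (in_dom zR) h1 h2.
    by move: he; rewrite (in_papp (pi_udom pR) zR) => -[->].
  case: hm => [[h1 [h2 [h3 [h4 h5]]]]|[h1 [h2 [h3 [h4 h5]]]]]; split; rewrite ?gen1 //.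
    by left; apply: conv h5.
  by right; apply: conv h5.
Qed.


Definition Pe (e : M) (G : pgraph M) (Os : seq M) :=
  (exists2 y, (e, y) \in G & forall s, s \in Os -> lt s y) \/
  (e \notin dom G /\ forall z w, (z, w) \in G -> lt e z -> lt e w /\ forall s, s \in Os -> lt s w).
Definition inab a b (n : pgraph M) :=
  forall pr, pr \in n -> [&& lt a pr.1, lt pr.1 b, lt a pr.2 & lt pr.2 b].

Lemma inab_cat a b n1 n2 : inab a b n1 -> inab a b n2 -> inab a b (n1 ++ n2).
Proof. by move=> h1 h2 pr; rewrite mem_cat => /orP [/h1|/h2]. Qed.
Lemma inab_nil a b : inab a b [::]. Proof. by []. Qed.

Lemma fix_under (P Q : pgraph M) l x : (x, x) \in P -> (x, x) \in Q -> (x, x) \in under P Q l.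
Proof. by rewrite /under; case: l.1. Qed.
Lemma fix_other (P Q : pgraph M) l x : (x, x) \in P -> (x, x) \in Q -> (x, x) \in other P Q l.
Proof. by rewrite /other; case: l.1. Qed.
Lemma fix_gen (P Q : pgraph M) l x : (x, x) \in P -> (x, x) \in Q -> (x, x) \in gen P Q l.
Proof. by rewrite /gen; case: l.1; case: l.2; rewrite ?in_pinv. Qed.

Lemma pi_from_gen (P Q : pgraph M) l : partial_iso d lt (gen P Q l) -> partial_iso d lt (other P Q l) ->
  partial_iso d lt P /\ partial_iso d lt Q.
Proof. rewrite /gen /other; case: l.1; case: l.2 => /= h1 h2; split => //;
  by move: (pi_pinv h1); rewrite pinvK. Qed.

Lemma addl_cat (P Q : pgraph M) l x y :
  (addl P Q l x y).1 = P ++ (if l.1 then [::] else [:: if l.2 then (y, x) else (x, y)]) /\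
  (addl P Q l x y).2 = Q ++ (if l.1 then [:: if l.2 then (y, x) else (x, y)] else [::]).
Proof. by rewrite /addl; case: l.1; rewrite /= cats0. Qed.

Lemma Pe_add e' e y (G : pgraph M) Os : Pe e' G Os -> lt e y -> (forall s, s \in Os -> lt s y) ->
  Pe e' (G ++ [:: (e, y)]) Os.
Proof. move=> [[y' h1 h2]|[h1 h2]] hy hs.
    by left; exists y' => //; rewrite mem_cat h1.
  case: (eqVneq e' e) => [->|ne].
    by left; exists y => //; rewrite mem_cat inE eqxx orbT.
  right; split.
    by rewrite /dom map_cat mem_cat negb_or h1 /= inE.
  move=> z w; rewrite mem_cat inE => /orP [hz|/eqP [-> ->]]; first exact: h2.
  by move=> h; split => //; apply: ltT h hy.
Qed.

Lemma block (l : letter) a b j (Os : seq M) (es : seq M) : forall (P Q : pgraph M),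
  partial_iso d lt P -> partial_iso d lt Q -> (a, a) \in P -> (b, b) \in P ->
  (a, a) \in Q -> (b, b) \in Q ->
  CH (under P Q l) a b j -> INC (gen P Q l) j b -> (forall s, s \in Os -> lt s b) ->
  (forall e, e \in es -> [/\ lt j e, lt e b & Pe e (gen P Q l) Os]) ->
  exists nP nQ, inab a b nP /\ inab a b nQ /\ partial_iso d lt (P ++ nP) /\ partial_iso d lt (Q ++ nQ) /\
   other (P ++ nP) (Q ++ nQ) l = other P Q l /\ CH (under (P ++ nP) (Q ++ nQ) l) a b j /\
   INC (gen (P ++ nP) (Q ++ nQ) l) j b /\
   forall e, e \in es -> exists2 y, (e, y) \in gen (P ++ nP) (Q ++ nQ) l & forall s, s \in Os -> lt s y.
Proof.
  elim: es => [|e es IH] P Q hP hQ aP bP aQ bQ hC hI hOs Hes.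
    exists [::], [::]; rewrite !cats0; do 7 (split => //).
  have [hje heb hPe] := Hes e (mem_head _ _).
  have Hes' : forall e', e' \in es -> [/\ lt j e', lt e' b & Pe e' (gen P Q l) Os].
    by move=> e' he'; apply: Hes; rewrite inE he' orbT.
  have aU : (a, a) \in under P Q l by apply: fix_under.
  have [jU bU haj hjb hab] := CH_props aU hC.
  case: hPe => [[y hy hys]|[hnd hB]].
    have [nP [nQ [i1 [i2 [p1 [p2 [o1 [c1 [n1 H1]]]]]]]]] := IH P Q hP hQ aP bP aQ bQ hC hI hOs Hes'.
    exists nP, nQ; do 7 (split => //).
    move=> e'; rewrite inE => /orP [/eqP ->|/H1 //]; exists y => //.
    by apply: mem_gen_sub hy; move=> x; rewrite mem_cat => ->.
  set G := gen P Q l.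
  have bG : (b, b) \in G by apply: fix_gen.
  have HS : forall z w, (z, w) \in G -> lt e z -> forall s, s \in e :: Os -> lt s w.
    move=> z w hz hez s'; rewrite inE => /orP [/eqP ->|hs]; first by case: (hB _ _ hz hez).
    by case: (hB _ _ hz hez) => _; apply.
  have [y [piy ynr ynr' ys yb]] := @SP G [::] (e :: Os) e b (pi_gen l hP hQ) hnd bG heb (mem_head _ _) HS.
  have hey : lt e y by apply: ys; rewrite mem_head.
  have hOy : forall s, s \in Os -> lt s y by move=> s' hs; apply: ys; rewrite inE hs orbT.
  have [eP1 eQ1] := addl_cat P Q l e y.
  set P1 := (addl P Q l e y).1; set Q1 := (addl P Q l e y).2.
  have gen1 : gen P1 Q1 l = G ++ [:: (e, y)] by apply: gen_add.
  have oth1 : other P1 Q1 l = other P Q l by apply: other_add.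
  have [hP1 hQ1] : partial_iso d lt P1 /\ partial_iso d lt Q1.
    apply: (@pi_from_gen P1 Q1 l); first by rewrite gen1.
    by rewrite oth1 /other; case: ifP.
  have sP1 : pext P1 P by rewrite /P1 eP1 => x hx; rewrite mem_cat hx.
  have sQ1 : pext Q1 Q by rewrite /Q1 eQ1 => x hx; rewrite mem_cat hx.
  have hI1 : INC (gen P1 Q1 l) j b.
    rewrite gen1 => z w; rewrite mem_cat inE => /orP [hz|/eqP [-> ->]]; first exact: hI.
    by move=> _ _.
  have hpr : lt j (if l.2 then (y, e) else (e, y)).1 /\ lt (if l.2 then (y, e) else (e, y)).1 b.
    by case: l.2 => /=; split => //; apply: ltT hje hey.
  have hC1 : CH (under P1 Q1 l) a b j.
    have eU : under P1 Q1 l = under P Q l ++ [:: if l.2 then (y, e) else (e, y)] by apply: under_add.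
    have pU1 : partial_iso d lt (under P1 Q1 l) by rewrite /under; case: ifP.
    have jU1 : (j, j) \in under P1 Q1 l by rewrite eU mem_cat jU.
    have bU1 : (b, b) \in under P1 Q1 l by rewrite eU mem_cat bU.
    have := (gen_dir pU1 jU1 bU1).1 hI1; rewrite eU => Hd.
    case: hC => s [c1 c2 c3 c4]; exists s; split => //.
    apply: chain_add c1 c2 (or_introl c4) _ hpr.1 hpr.2 c3.
    by move: Hd; case: l.2 => Hd; [right|left].
  have Hes1 : forall e', e' \in es -> [/\ lt j e', lt e' b & Pe e' (gen P1 Q1 l) Os].
    move=> e' he'; have [h1 h2 h3] := Hes' e' he'; split => //; rewrite gen1.
    exact: Pe_add.
  have [nP [nQ [i1 [i2 [p1 [p2 [o1 [c1 [n1 H1]]]]]]]]] :=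
    IH P1 Q1 hP1 hQ1 (sP1 _ aP) (sP1 _ bP) (sQ1 _ aQ) (sQ1 _ bQ) hC1 hI1 hOs Hes1.
  have inab1 : inab a b [:: if l.2 then (y, e) else (e, y)].
    move=> pr; rewrite inE => /eqP ->.
    have hae : lt a e by apply: le_ltT haj hje.
    have hay : lt a y by apply: ltT hae hey.
    by case: l.2; rewrite /= ?hae ?hay ?heb ?yb.
  move: i1 i2 p1 p2 o1 c1 n1 H1; rewrite /P1 /Q1 eP1 eQ1 -!catA => i1 i2 p1 p2 o1 c1 n1 H1.
  exists ((if l.1 then [::] else [:: if l.2 then (y, e) else (e, y)]) ++ nP).
  exists ((if l.1 then [:: if l.2 then (y, e) else (e, y)] else [::]) ++ nQ).
  split; first by apply: inab_cat => //; case: l.1.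
  split; first by apply: inab_cat => //; case: l.1.
  do 2 (split => //).
  split; first by rewrite o1 -oth1 /P1 /Q1 eP1 eQ1.
  do 2 (split => //).
  move=> e'; rewrite inE => /orP [/eqP ->|/H1 //]; exists y => //.
  apply: mem_gen_sub (_ : (e, y) \in gen P1 Q1 l).
  - by move=> x hx; rewrite catA mem_cat -eP1 hx.
  - by move=> x hx; rewrite catA mem_cat -eQ1 hx.
  - by rewrite gen1 mem_cat inE eqxx orbT.
Qed.


Definition Inv a b (C : pred M) (W : word) (P Q : pgraph M) :=
  [/\ partial_iso d lt P, partial_iso d lt Q, (a, a) \in P, (b, b) \in P &
      [/\ (a, a) \in Q, (b, b) \in Q & lt a b]] /\
  match W with
  | [::] => False
  | l0 :: _ => exists j, CH (under P Q l0) a b j /\ CH (other P Q l0) a b a /\ INC (gen P Q l0) j b /\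
      forall c, C c -> exists e, [/\ weval W P Q c = Some e, lt j e, lt e b &
         forall x, x \in pts (other P Q l0) -> lt a x -> lt x b -> lt x e]
  end.

Lemma choose_list (T : eqType) (cs : seq T) (R : T -> M -> Prop) :
  (forall c, c \in cs -> exists e, R c e) ->
  exists es : seq M, (forall c, c \in cs -> exists e, e \in es /\ R c e) /\ (forall e, e \in es -> exists c, R c e).
Proof. elim: cs => [|c cs IH] H; first by exists [::].
  have [e he] := H c (mem_head _ _).
  have [es [h1 h2]] : exists es : seq M, (forall c, c \in cs -> exists e, e \in es /\ R c e) /\
      (forall e, e \in es -> exists c, R c e).
    by apply: IH => c' hc'; apply: H; rewrite inE hc' orbT.
  exists (e :: es); split.
    move=> c'; rewrite inE => /orP [/eqP ->|/h1 [e' [h3 h4]]]; first by exists e; rewrite mem_head.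
    by exists e'; rewrite inE h3 orbT.
  move=> e'; rewrite inE => /orP [/eqP ->|/h2 //]; by exists c.
Qed.

Lemma pts_gen (P Q : pgraph M) l z w : (z, w) \in gen P Q l ->
  z \in pts (under P Q l) /\ w \in pts (under P Q l).
Proof. rewrite gen_under /pts !mem_cat; case: l.2; rewrite ?in_pinv => h.
  - by rewrite (in_dom h) (in_ran h) orbT.
  - by rewrite (in_dom h) (in_ran h) orbT.
Qed.

Lemma pts_gen_under (P Q : pgraph M) l z : z \in pts (gen P Q l) -> z \in pts (under P Q l).
Proof. rewrite gen_under; case: l.2 => //; rewrite /pts dom_pinv ran_pinv !mem_cat orbC //. Qed.

Lemma pi_addfix (G : pgraph M) f : partial_iso d lt G -> f \notin pts G ->
  (forall z w, (z, w) \in G -> d z f = d w f /\ lt z f = lt w f) ->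
  partial_iso d lt (G ++ [:: (f, f)]).
Proof. case=> [u1 [u2 H]] hf Hz.
  have fd : f \notin dom G by apply: contra hf; rewrite /pts mem_cat => ->.
  have fr : f \notin ran G by apply: contra hf; rewrite /pts mem_cat => ->; rewrite orbT.
  split; first by rewrite /dom map_cat cat_uniq u1 /= andbT orbF.
  split; first by rewrite /ran map_cat cat_uniq u2 /= andbT orbF.
  have nz : forall z w, (z, w) \in G -> f != z /\ f != w.
    move=> z w h; split; apply/eqP=> e.
      by move/negP: fd; apply; rewrite e (in_dom h).
    by move/negP: fr; apply; rewrite e (in_ran h).
  have flip : forall x y, x != y -> lt x y = ~~ lt y x.
    move=> x y ne; apply/idP/idP; first exact: lt_asym.
    by move/nlt_eqlt/orP => [/eqP e|//]; move: ne; rewrite e eqxx.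
  move=> x1 y1 x2 y2; rewrite !mem_cat !inE.
  case/orP=> [h1|/eqP [-> ->]]; case/orP=> [h2|/eqP [-> ->]].
  - exact: H.
  - have [e1 e2] := Hz _ _ h1; by rewrite e1 e2.
  - have [e1 e2] := Hz _ _ h2; have [n1 n2] := nz _ _ h2.
    by rewrite d_sym e1 d_sym (flip _ _ n1) (flip _ _ n2) e2.
  - by rewrite d_xx.
Qed.

Lemma reduced_same (l l0 : letter) (W : word) : reduced (l :: l0 :: W) -> l.1 = l0.1 -> l = l0.
Proof. rewrite /reduced /= => /andP [h _] e; move: h; rewrite e eqxx /= => /negPn /eqP.
  by case: l l0 e => [x1 x2] [y1 y2] /= -> ->. Qed.

Lemma gen_other_swap (P Q : pgraph M) (l l0 : letter) : l.1 != l0.1 ->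
  under P Q l = other P Q l0 /\ other P Q l = under P Q l0.
Proof. by rewrite /under /other; case: l.1; case: l0.1. Qed.

Lemma Pe_B (G : pgraph M) j b e Os : partial_iso d lt G -> (b, b) \in G -> INC G j b ->
  lt j e -> lt e b -> (forall s, s \in Os -> lt s e) -> Pe e G Os.
Proof. move=> pG bG hI hje heb hOs.
  case: (boolP (e \in dom G)) => hd.
    have [y hy] := domP hd; have hey : lt e y by apply: (hI _ _ hy).
    by left; exists y => // s hs; apply: ltT (hOs _ hs) hey.
  right; split => // z w hz hez.
  case: (boolP (lt z b)) => hzb.
    have hzw : lt z w by apply: (hI _ _ hz) => //; apply: ltT hje hez.
    have hew := ltT hez hzw; split => // s hs; exact: ltT (hOs _ hs) hew.
  have hbw : le b w by have [e1 _] := pi_fix_le pG bG hz; rewrite -e1.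
  have hew : lt e w := lt_leT heb hbw.
  split => // s hs; exact: ltT (hOs _ hs) hew.
Qed.


Lemma lt_not_eqlt x y : lt x y -> ~~ ((y == x) || lt y x).
Proof. move=> h; apply/negP => /eqlt_nlt; by rewrite h. Qed.

Lemma insert_fix (P Q : pgraph M) (l : letter) a b (es : seq M) :
  partial_iso d lt P -> partial_iso d lt Q -> (a, a) \in P -> (b, b) \in P ->
  (a, a) \in Q -> (b, b) \in Q -> lt a b ->
  CH (under P Q l) a b a ->
  (forall e, e \in es -> [/\ lt a e, lt e b &
     forall x, x \in pts (under P Q l) -> lt a x -> lt x b -> lt x e]) ->
  exists f, let P1 := (addl P Q l f f).1 in let Q1 := (addl P Q l f f).2 in
    [/\ partial_iso d lt P1, partial_iso d lt Q1, CH (under P1 Q1 l) a b f, INC (gen P1 Q1 l) f b &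
     [/\ lt a f, lt f b, (forall e, e \in es -> lt f e) &
         forall z w, (z, w) \in gen P1 Q1 l -> lt f z -> ~~ lt z b]].
Proof. move=> hP hQ aP bP aQ bQ hab hC Hes.
  set H := under P Q l; set G := gen P Q l.
  set A := pts P ++ pts Q ++ es.
  set HS := a :: [seq s <- pts H | lt s b].
  pose L := fun z => has (fun s => (z == s) || lt z s) HS.
  have HL : forall a1 a2, a1 \in A -> a2 \in A -> L a1 -> lt a2 a1 -> L a2.
    move=> a1 a2 _ _ /hasP [s hs hh] h21; apply/hasP; exists s => //.
    case/orP: hh => [/eqP <-|h1]; first by rewrite h21 orbT.
    by rewrite (ltT h21 h1) orbT.
  have [f [fA fd fl]] := FP HL.
  have pH : partial_iso d lt H by rewrite /H /under; case: ifP.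
  have ptsH : forall z, z \in pts H -> z \in A.
    move=> z; rewrite /H /under; case: ifP => _ hz; rewrite /A mem_cat; apply/orP.
      by right; rewrite mem_cat hz.
    by left.
  have aA : a \in A by rewrite /A mem_cat; apply/orP; left; rewrite /pts mem_cat (in_dom aP).
  have bA : b \in A by rewrite /A mem_cat; apply/orP; left; rewrite /pts mem_cat (in_dom bP).
  have hsb : forall s, s \in HS -> lt s b.
    by move=> s; rewrite inE => /orP [/eqP ->//|]; rewrite mem_filter => /andP [].
  have LH : forall z, z \in pts H -> L z = lt z b.
    move=> z hz; apply/idP/idP.
      by move/hasP=> [s hs /orP [/eqP ->|h]]; [apply: hsb|apply: ltT h (hsb _ hs)].
    move=> hzb; apply/hasP; exists z; last by rewrite eqxx.
    by rewrite inE mem_filter hzb hz orbT.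
  have nfA : forall z, z \in A -> f != z.
    by move=> z hz; apply/eqP => e; move/negP: fA; apply; rewrite e.
  have flip : forall x y, x != y -> lt x y = ~~ lt y x.
    move=> x y ne; apply/idP/idP; first exact: lt_asym.
    by move/nlt_eqlt/orP => [/eqP e|//]; move: ne; rewrite e eqxx.
  have haf : lt a f by rewrite (fl _ aA); apply/hasP; exists a; rewrite ?mem_head ?eqxx.
  have hfb : lt f b.
    rewrite (flip _ _ (nfA _ bA)) (fl _ bA); apply/hasP => -[s hs]; apply/negP.
    exact: lt_not_eqlt (hsb _ hs).
  have hfe : forall e, e \in es -> lt f e.
    move=> e he; have eA : e \in A by rewrite /A !mem_cat he !orbT.
    have [h1 h2 h3] := Hes e he.
    rewrite (flip _ _ (nfA _ eA)) (fl _ eA); apply/hasP => -[s hs]; apply/negP.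
    apply: lt_not_eqlt; move: hs; rewrite inE => /orP [/eqP ->//|]; rewrite mem_filter => /andP [hsb' hs].
    case: (boolP (lt a s)) => has'; first exact: h3.
    by apply: le_ltT _ h1.
  have hzf : forall z, z \in pts H -> lt z b -> lt z f by move=> z hz hzb; rewrite (fl _ (ptsH _ hz)) LH.
  have pG1 : partial_iso d lt (G ++ [:: (f, f)]).
    apply: pi_addfix; first exact: pi_gen.
      by apply/negP => /pts_gen_under /ptsH; apply/negP.
    move=> z w hzw; have [hz hw] := pts_gen hzw.
    rewrite (fd _ _ (ptsH _ hz) (ptsH _ hw)) (fl _ (ptsH _ hz)) (fl _ (ptsH _ hw)) !LH //; split => //.
    have bG : (b, b) \in G by apply: fix_gen.
    by have [_ [_ [_ ->]]] := pi_fix_le (pi_gen l hP hQ) bG hzw.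
  exists f => P1 Q1.
  have gen1 : gen P1 Q1 l = G ++ [:: (f, f)] by apply: gen_add.
  have oth1 : other P1 Q1 l = other P Q l by apply: other_add.
  have und1 : under P1 Q1 l = H ++ [:: (f, f)] by rewrite (under_add P Q l f f); case: (l.2).
  have [hP1 hQ1] : partial_iso d lt P1 /\ partial_iso d lt Q1.
    apply: (@pi_from_gen P1 Q1 l); first by rewrite gen1.
    by rewrite oth1 /other; case: ifP.
  have contra1 : forall z, z \in pts H -> lt f z -> lt z b -> False.
    move=> z hz h1 h2; have := hzf _ hz h2; by rewrite (negbTE (lt_asym h1)).
  split => //.
  - have aH : (a, a) \in H by apply: fix_under.
    case: hC => s [c1 c2 c3 c4].
    have fnot : f \notin a :: s.
      apply/negP => hf; move/negP: fA; apply; apply: ptsH; rewrite /pts mem_cat; apply/orP; left.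
      move: hf; rewrite inE => /orP [/eqP ->|hf]; first exact: in_dom aH.
      exact: in_dom (chain_fix c3 hf).
    have Hi : forall c c', Mono H c c' -> ~~ (lt c f && lt f c') -> Mono (H ++ [:: (f, f)]) c c'.
      move=> c c' [m1 m2 m3] hn; split; rewrite ?mem_cat ?m1 ?m2 //.
      by case: m3 => hm; [left; apply: (@INC_add H (f, f) c c' hm hn)|right; apply: (@DEC_add H (f, f) c c' hm hn)].
    have Hii : forall c c', Mono H c c' -> lt c f -> lt f c' -> le c' b ->
        Mono (H ++ [:: (f, f)]) c f /\ Mono (H ++ [:: (f, f)]) f c'.
      move=> c c' [m1 m2 m3] hcf hfc' hc'b.
      have fH1 : (f, f) \in H ++ [:: (f, f)] by rewrite mem_cat inE eqxx orbT.
      split; split; rewrite ?fH1 ?mem_cat ?m1 ?m2 //.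
        case: m3 => hm; [left|right] => z w; rewrite mem_cat inE => /orP [hz|/eqP [-> _]] h1 h2;
          rewrite ?(negbTE (ltxx' f)) // in h2; apply: (hm _ _ hz h1); exact: ltT h2 hfc'.
      left => z w; rewrite mem_cat inE => /orP [hz|/eqP [-> _]] h1 h2.
        exfalso; apply: (contra1 z) => //; first by rewrite /pts mem_cat (in_dom hz).
        exact: lt_leT h2 hc'b.
      by move: h1; rewrite (negbTE (ltxx' f)).
    have [s' [d1 d2 d3 d4]] := @split_chain (Mono H) (Mono (H ++ [:: (f, f)])) a s b f c1 c2 fnot haf hfb
      Hi Hii c3.
    exists s'; rewrite und1; split => //; by rewrite inE d4 orbT.
  - rewrite gen1 => z w; rewrite mem_cat inE => /orP [hz|/eqP [-> _]] h1 h2.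
      by exfalso; apply: (contra1 z) => //; have [] := pts_gen hz.
    by move: h1; rewrite (negbTE (ltxx' f)).
  - split => // z w; rewrite gen1 mem_cat inE => /orP [hz|/eqP [-> _]] h1.
      by apply/negP => h2; apply: (contra1 z) => //; have [] := pts_gen hz.
    by move: h1; rewrite (negbTE (ltxx' f)).
Qed.


Lemma finish a b (C : pred M) l (W : word) (P Q P' Q' : pgraph M) j (es : seq M) :
  partial_iso d lt P -> partial_iso d lt Q -> partial_iso d lt P' -> partial_iso d lt Q' ->
  pext P' P -> pext Q' Q -> (a, a) \in P' -> (b, b) \in P' -> (a, a) \in Q' -> (b, b) \in Q' -> lt a b ->
  CH (under P' Q' l) a b j -> CH (other P' Q' l) a b a -> INC (gen P' Q' l) j b ->
  (forall c, C c -> exists e, e \in es /\ weval W P Q c = Some e) ->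
  (forall e, e \in es -> [/\ lt j e, lt e b & exists2 y, (e, y) \in gen P' Q' l &
      forall x, x \in pts (other P' Q' l) -> lt a x -> lt x b -> lt x y]) ->
  Inv a b C (l :: W) P' Q'.
Proof. move=> hP hQ hP' hQ' sP sQ aP bP aQ bQ hab hCu hCo hI Hc He.
  split; first by split.
  exists j; do 3 (split => //).
  move=> c hc; have [e [hee hw]] := Hc c hc; have [hje heb [y hy hx]] := He e hee.
  have hey : lt e y by apply: (hI _ _ hy).
  exists y; split.
  - by rewrite weval_cons (weval_mono hP hQ hP' hQ' sP sQ hw) /=; apply/act_mem.
  - exact: ltT hje hey.
  - have bG : (b, b) \in gen P' Q' l by apply: fix_gen.
    by rewrite -(pi_lt (pi_gen l hP' hQ') hy bG).
  - exact: hx.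
Qed.

Lemma step a b (C : pred M) (cs : seq M) (l : letter) (W : word) (P Q : pgraph M) :
  (forall c, C c -> c \in cs) -> reduced (l :: W) -> Inv a b C W P Q ->
  exists nP nQ, inab a b nP /\ inab a b nQ /\ Inv a b C (l :: W) (P ++ nP) (Q ++ nQ).
Proof.
  move=> hcs hred [[hP hQ aP bP [aQ bQ hab]] HI].
  case: W hred HI => [|l0 W'] // hred [j [hCu [hCo [hI Hv]]]].
  set W := l0 :: W'.
  pose R := fun c e => [/\ weval W P Q c = Some e, lt j e, lt e b &
     forall x, x \in pts (other P Q l0) -> lt a x -> lt x b -> lt x e].
  have Hv' : forall c, c \in [seq c <- cs | C c] -> exists e, R c e.
    by move=> c; rewrite mem_filter => /andP [hc _]; apply: Hv.
  have [es [hes1 hes2]] := choose_list Hv'.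
  have Hc : forall c, C c -> exists e, e \in es /\ weval W P Q c = Some e.
    move=> c hc; have hc' : c \in [seq c <- cs | C c] by rewrite mem_filter hc hcs.
    have [e [he [h1 _ _ _]]] := hes1 c hc'.
    by exists e.
  have aU : (a, a) \in under P Q l0 by apply: fix_under.
  have [jU bU haj hjb _] := CH_props aU hCu.
  set Os := [seq x <- pts (other P Q l) | lt a x && lt x b].
  have hOs : forall s, s \in Os -> lt s b by move=> s'; rewrite mem_filter => /andP [/andP []].
  have sPc : forall n, pext (P ++ n) P by move=> n x hx; rewrite mem_cat hx.
  have sQc : forall n, pext (Q ++ n) Q by move=> n x hx; rewrite mem_cat hx.
  case: (eqVneq l.1 l0.1) => hll.
  - have el := reduced_same hred hll; subst l0.
    have Hpre : forall e, e \in es -> [/\ lt j e, lt e b & Pe e (gen P Q l) Os].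
      move=> e he; have [c [_ h2 h3 h4]] := hes2 e he; split => //.
      apply: (Pe_B (pi_gen l hP hQ) (fix_gen l bP bQ) hI h2 h3).
      by move=> s'; rewrite mem_filter => /andP [/andP [ha hb] hs]; apply: h4.
    have [nP [nQ [i1 [i2 [p1 [p2 [o1 [c1 [n1 H1]]]]]]]]] :=
      block hP hQ aP bP aQ bQ hCu hI hOs Hpre.
    exists nP, nQ; do 2 (split => //).
    apply: (finish hP hQ p1 p2 (sPc _) (sQc _)) c1 _ n1 Hc _;
      rewrite ?mem_cat ?aP ?bP ?aQ ?bQ ?o1 //.
    move=> e he; have [c [_ h2 h3 _]] := hes2 e he; split => //.
    have [y hy1 hy2] := H1 e he; exists y => // x hx hax hxb; apply: hy2.
    by rewrite mem_filter hax hxb.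
  - have [eU eO] := gen_other_swap P Q hll.
    have Hes : forall e, e \in es -> [/\ lt a e, lt e b &
        forall x, x \in pts (under P Q l) -> lt a x -> lt x b -> lt x e].
      move=> e he; have [c [_ h2 h3 h4]] := hes2 e he; split => //.
        exact: le_ltT haj h2.
      by rewrite eU.
    have hCo' : CH (under P Q l) a b a by rewrite eU.
    have [f] := insert_fix hP hQ aP bP aQ bQ hab hCo' Hes.
    have [eP1 eQ1] := addl_cat P Q l f f.
    move: eP1 eQ1; set P1 := (addl P Q l f f).1; set Q1 := (addl P Q l f f).2 => eP1 eQ1.
    move=> [pP1 pQ1 hC1 hI1 [haf hfb hfe hgen]].
    have oth1 : other P1 Q1 l = other P Q l by apply: other_add.
    have gen1b : (b, b) \in gen P1 Q1 l.
      by apply: fix_gen; [rewrite eP1 mem_cat bP|rewrite eQ1 mem_cat bQ].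
    have Hpre : forall e, e \in es -> [/\ lt f e, lt e b & Pe e (gen P1 Q1 l) Os].
      move=> e he; have [c [_ h2 h3 h4]] := hes2 e he; split => //; first exact: hfe.
      right; split.
        apply/negP => /domP [w hw]; have := hgen _ _ hw (hfe _ he); by rewrite h3.
      move=> z w hz hez; have hbz := hgen _ _ hz (ltT (hfe _ he) hez).
      have hbw : le b w.
        by have [_ [_ [_ e4]]] := pi_fix_le (pi_gen l pP1 pQ1) gen1b hz; rewrite /le -e4.
      split; first exact: lt_leT h3 hbw.
      by move=> s' hs; apply: lt_leT (hOs _ hs) hbw.
    have hOs1 : forall s, s \in Os -> lt s b := hOs.
    have aP1 : (a, a) \in P1 by rewrite eP1 mem_cat aP.
    have bP1 : (b, b) \in P1 by rewrite eP1 mem_cat bP.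
    have aQ1 : (a, a) \in Q1 by rewrite eQ1 mem_cat aQ.
    have bQ1 : (b, b) \in Q1 by rewrite eQ1 mem_cat bQ.
    have [nP [nQ [i1 [i2 [p1 [p2 [o1 [c1 [n1 H1]]]]]]]]] :=
      @block l a b f Os es P1 Q1 pP1 pQ1 aP1 bP1 aQ1 bQ1 hC1 hI1 hOs Hpre.
    set n1P := if l.1 then [::] else [:: if l.2 then (f, f) else (f, f)].
    set n1Q := if l.1 then [:: if l.2 then (f, f) else (f, f)] else [::].
    exists (n1P ++ nP), (n1Q ++ nQ).
    have inf : inab a b [:: if l.2 then (f, f) else (f, f)].
      by move=> pr; rewrite inE => /eqP ->; case: (l.2); rewrite /= haf hfb.
    split; first by apply: inab_cat => //; rewrite /n1P; case: (l.1).
    split; first by apply: inab_cat => //; rewrite /n1Q; case: (l.1).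
    rewrite !catA -eP1 -eQ1.
    have sP1 : pext (P1 ++ nP) P by move=> x hx; rewrite mem_cat eP1 mem_cat hx.
    have sQ1 : pext (Q1 ++ nQ) Q by move=> x hx; rewrite mem_cat eQ1 mem_cat hx.
    apply: (finish hP hQ p1 p2 sP1 sQ1) c1 _ n1 Hc _; rewrite ?mem_cat ?aP1 ?bP1 ?aQ1 ?bQ1 //.
      by rewrite o1 oth1 eO; apply: CH_a hCu.
    move=> e he; have [c [_ h2 h3 _]] := hes2 e he; split => //; first exact: hfe.
    have [y hy1 hy2] := H1 e he; exists y => // x hx hax hxb; apply: hy2.
    by rewrite mem_filter hax hxb -oth1 -o1.
Qed.


Lemma domR_le (g : pgraph M) a b x : x \in dom (restr lt g a b) -> le a x && le x b.
Proof. by move/domP => [y]; rewrite mem_restr => /and3P [_ -> ->]. Qed.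

Lemma ranR_le (g G : pgraph M) a b x : partial_iso d lt G -> pext G g -> (a, a) \in G -> (b, b) \in G ->
  x \in ran (restr lt g a b) -> le a x && le x b.
Proof. move=> pG sG aG bG /ranP [z]; rewrite mem_restr => /and3P [hz h1 h2].
  have [e1 _] := pi_fix_le pG aG (sG _ hz); have [_ [e2 _]] := pi_fix_le pG bG (sG _ hz).
  by rewrite -e1 -e2 h1 h2. Qed.

Lemma dmin_restr (g : pgraph M) a b : (a, a) \in g -> le a b -> is_dmin lt (restr lt g a b) a.
Proof. move=> ha hab; rewrite /is_dmin; apply/andP; split.
    by apply: (in_dom (y := a)); rewrite mem_restr ha lexx' hab.
  by apply/allP => x /domR_le /andP [h _]; rewrite eqlt_le'. Qed.
Lemma dmax_restr (g : pgraph M) a b : (b, b) \in g -> le a b -> is_dmax lt (restr lt g a b) b.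
Proof. move=> hb hab; rewrite /is_dmax; apply/andP; split.
    by apply: (in_dom (y := b)); rewrite mem_restr hb lexx' hab.
  by apply/allP => x /domR_le /andP [_ h]; rewrite eqlt_le. Qed.

Lemma dmax_eq (g : pgraph M) a b j : (b, b) \in g -> le a b -> is_dmax lt (restr lt g a b) j -> j = b.
Proof. move=> hb hab /andP [hj /allP H].
  have bR : b \in dom (restr lt g a b) by apply: (in_dom (y := b)); rewrite mem_restr hb lexx' hab.
  case/orP: (H _ bR) => [/eqP -> //|h].
  by move: (domR_le hj) => /andP [_ h']; move: h'; rewrite /le h. Qed.

Lemma ess_in (g G : pgraph M) a b x : partial_iso d lt G -> pext G g -> (a, a) \in g -> (b, b) \in g ->
  le a b -> ess lt (restr lt g a b) x -> [/\ lt a x, lt x b & x \in pts g].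
Proof. move=> pG sG ag bg hab /andP [/andP [hx hmin] hmax].
  have hle : le a x && le x b.
    by case/orP: hx => h; [exact: domR_le h|exact: ranR_le pG sG (sG _ ag) (sG _ bg) h].
  move/andP: hle => [h1 h2].
  have nxa : x != a by apply: contra hmin => /eqP ->; apply: dmin_restr.
  have nxb : x != b by apply: contra hmax => /eqP ->; apply: dmax_restr.
  split.
  - by case/orP: (nlt_eqlt h1) => [/eqP e|//]; move: nxa; rewrite e eqxx.
  - by case/orP: (nlt_eqlt h2) => [/eqP e|//]; move: nxb; rewrite -e eqxx.
  - rewrite /pts mem_cat; case/orP: hx => [/domP [y]|/ranP [y]]; rewrite mem_restr => /andP [h _].
      by rewrite (in_dom h).
    by rewrite (in_ran h) orbT.
Qed.

Lemma in_ess (g : pgraph M) a b x : partial_iso d lt g -> (a, a) \in g -> (b, b) \in g ->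
  x \in pts g -> lt a x -> lt x b -> ess lt (restr lt g a b) x.
Proof. move=> pg ag bg hx h1 h2; have hab : le a b by apply: ltW' (ltT h1 h2).
  apply/andP; split; first (apply/andP; split).
  - rewrite /pts mem_cat in hx; case/orP: hx => [/domP [y hy]|/ranP [y hy]].
      by rewrite (in_dom (y := y)) // mem_restr hy (ltW' h1) (ltW' h2).
    have [e1 _] := pi_fix_le pg ag hy; have [_ [e2 _]] := pi_fix_le pg bg hy.
    by rewrite orbC (in_ran (x := y)) // mem_restr hy e1 e2 (ltW' h1) (ltW' h2).
  - apply/negP => /andP [_ /allP H].
    have aR : a \in dom (restr lt g a b) by apply: (in_dom (y := a)); rewrite mem_restr ag lexx' hab.
    by case/orP: (H _ aR) => [/eqP e|h]; [move: h1; rewrite e (negbTE (ltxx' _))|move: (lt_asym h); rewrite h1].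
  - apply/negP => /andP [_ /allP H].
    have bR : b \in dom (restr lt g a b) by apply: (in_dom (y := b)); rewrite mem_restr bg lexx' hab.
    by case/orP: (H _ bR) => [/eqP e|h]; [move: h2; rewrite e (negbTE (ltxx' _))|move: (lt_asym h); rewrite h2].
Qed.

Lemma exists_min (C : pred M) (cs : seq M) c : (forall c, C c -> c \in cs) -> C c ->
  exists c0, C c0 /\ forall c', C c' -> (c' == c0) || lt c0 c'.
Proof. move=> hcs hc.
  suff : forall s : seq M, (exists2 c, c \in s & C c) ->
      exists c0, [/\ c0 \in s, C c0 & forall c', c' \in s -> C c' -> (c' == c0) || lt c0 c'].
    case/(_ cs) => [|c0 [_ h1 h2]]; first by exists c => //; apply: hcs.
    by exists c0; split => // c' hc'; apply: h2 => //; apply: hcs.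
  elim=> [[? //]|x s IH] [c' hc' Cc'].
  case: (boolP (has C s)) => hs.
    have [y hy Cy] := hasP hs; have [c0 [h1 h2 h3]] := IH (ex_intro2 _ _ y hy Cy).
    case: (boolP (C x)) => Cx.
      case: (boolP (lt x c0)) => hx.
        exists x; split; rewrite ?mem_head // => z; rewrite inE => /orP [/eqP -> //|hz] Cz.
          by rewrite eqxx.
        case/orP: (h3 _ hz Cz) => [/eqP ->|h]; first by rewrite hx orbT.
        by rewrite (ltT hx h) orbT.
      exists c0; split; rewrite ?inE ?h1 ?orbT // => z; rewrite inE => /orP [/eqP ->|hz] Cz; last exact: h3.
      by case/orP: (nlt_eqlt hx) => [->//|->]; rewrite orbT.
    exists c0; split; rewrite ?inE ?h1 ?orbT // => z; rewrite inE => /orP [/eqP ez|hz] Cz; last exact: h3.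
    by move: Cx; rewrite -ez Cz.
  have ex : c' = x.
    move: hc'; rewrite inE => /orP [/eqP //|h]; by move/hasP: hs; case; exists c'.
  subst c'; exists x; split; rewrite ?mem_head // => z; rewrite inE => /orP [/eqP ->|hz] Cz.
    by rewrite eqxx.
  by move/hasP: hs; case; exists z.
Qed.

Lemma INC_pinc (g : pgraph M) a b j : partial_iso d lt g -> (j, j) \in g -> (b, b) \in g ->
  le a j -> le j b -> le a b -> INC g j b -> p_increasing lt (restr lt g a b) j b.
Proof. move=> pg jg bg h1 h2 hab H.
  have pR := pi_restr a b pg.
  have jR : (j, j) \in restr lt g a b by rewrite mem_restr jg h1 h2.
  have bR : (b, b) \in restr lt g a b by rewrite mem_restr bg hab lexx'.
  split; first exact: in_dom jR. split; first exact: in_dom bR.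
  split; first by rewrite /fixb (in_papp (pi_udom pR) jR).
  split; first by rewrite /fixb (in_papp (pi_udom pR) bR).
  move=> c /domP [e he] hc1 hc2; exists e; first exact: in_papp (pi_udom pR) he.
  by move: he; rewrite mem_restr => /andP [he _]; apply: (H _ _ he).
Qed.
Lemma DEC_pdec (g : pgraph M) a b j : partial_iso d lt g -> (j, j) \in g -> (b, b) \in g ->
  le a j -> le j b -> le a b -> DEC g j b -> p_decreasing lt (restr lt g a b) j b.
Proof. move=> pg jg bg h1 h2 hab H.
  have pR := pi_restr a b pg.
  have jR : (j, j) \in restr lt g a b by rewrite mem_restr jg h1 h2.
  have bR : (b, b) \in restr lt g a b by rewrite mem_restr bg hab lexx'.
  split; first exact: in_dom jR. split; first exact: in_dom bR.
  split; first by rewrite /fixb (in_papp (pi_udom pR) jR).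
  split; first by rewrite /fixb (in_papp (pi_udom pR) bR).
  move=> c /domP [e he] hc1 hc2; exists e; first exact: in_papp (pi_udom pR) he.
  by move: he; rewrite mem_restr => /andP [he _]; apply: (H _ _ he).
Qed.

Lemma pinc_INC (g : pgraph M) a b j : partial_iso d lt g -> (b, b) \in g ->
  p_increasing lt (restr lt g a b) j b ->
  [/\ (j, j) \in g, le a j, le j b & INC g j b].
Proof. move=> pg bg [hj [hb [fj [fb H]]]].
  have pR := pi_restr a b pg.
  have [hj1 hj2] := andP (domR_le hj); have [_ hb2] := andP (domR_le hb).
  have jg : (j, j) \in g by move/eqP/papp_in: fj; rewrite mem_restr => /andP [].
  split => // z w hz h1 h2.
  have zR : (z, w) \in restr lt g a b.
    by rewrite mem_restr hz (ltW' (le_ltT hj1 h1)) (ltW' (lt_leT h2 hb2)).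
  have [e he hze] := H z (in_dom zR) h1 h2.
  by move: he; rewrite (in_papp (pi_udom pR) zR) => -[->].
Qed.
Lemma pdec_DEC (g : pgraph M) a b j : partial_iso d lt g -> (b, b) \in g ->
  p_decreasing lt (restr lt g a b) j b ->
  [/\ (j, j) \in g, le a j, le j b & DEC g j b].
Proof. move=> pg bg [hj [hb [fj [fb H]]]].
  have pR := pi_restr a b pg.
  have [hj1 hj2] := andP (domR_le hj); have [_ hb2] := andP (domR_le hb).
  have jg : (j, j) \in g by move/eqP/papp_in: fj; rewrite mem_restr => /andP [].
  split => // z w hz h1 h2.
  have zR : (z, w) \in restr lt g a b.
    by rewrite mem_restr hz (ltW' (le_ltT hj1 h1)) (ltW' (lt_leT h2 hb2)).
  have [e he hze] := H z (in_dom zR) h1 h2.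
  by move: he; rewrite (in_papp (pi_udom pR) zR) => -[->].
Qed.


Lemma tpow_cons (n : int) (v : word) : n != 0 ->
  exists w', tpow n ++ v = (true, n < 0) :: w'.
Proof. move=> hn; case e: `|n|%N => [|k].
    by move/eqP: e; rewrite absz_eq0 (negbTE hn).
  by exists (nseq k (true, n < 0) ++ v); rewrite /tpow /gpow e. Qed.

Definition Cp (p q : pgraph M) a b := fun c => ess lt (restr lt p a b) c || ess lt (restr lt q a b) c.

Lemma Cp_in (p q P Q : pgraph M) a b c : partial_iso d lt P -> partial_iso d lt Q -> pext P p -> pext Q q ->
  (a, a) \in p -> (b, b) \in p -> (a, a) \in q -> (b, b) \in q -> lt a b ->
  Cp p q a b c -> [/\ lt a c, lt c b & c \in pts p ++ pts q].
Proof. move=> pP pQ sP sQ ap bp aq bq hab /orP [h|h].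
    have [h1 h2 h3] := ess_in pP sP ap bp (ltW' hab) h; by rewrite mem_cat h3.
  have [h1 h2 h3] := ess_in pQ sQ aq bq (ltW' hab) h; by rewrite mem_cat h3 orbT.
Qed.

Lemma init (p q P Q : pgraph M) (w : word) a b :
  partial_iso d lt P -> partial_iso d lt Q -> pext P p -> pext Q q ->
  (a, a) \in p -> (b, b) \in p -> (a, a) \in q -> (b, b) \in q -> lt a b ->
  elib d lt (restr lt p a b) (restr lt q a b) (restr lt P a b) (restr lt Q a b) w ->
  Inv a b (Cp p q a b) w P Q.
Proof.
  move=> pP pQ sP sQ ap bp aq bq hab
    [_ [_ [_ [_ [infP [infQ [_ [_ [_ [_ [red [n [v [hn [ew [iv1 [iv2 [j1 [j2 [hj2 [hv [hinc hdec]]]]]]]]]]]]]]]]]]]]]].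
  have aP := sP _ ap; have bP := sP _ bp; have aQ := sQ _ aq; have bQ := sQ _ bq.
  have hCP := inform_CH pP aP bP hab infP.
  have hCQ := inform_CH pQ aQ bQ hab infQ.
  have ej2 : j2 = b by apply: dmax_eq hj2 => //; apply: ltW'.
  subst j2.
  set l0 := (true, n < 0).
  have [jQ hj1a hj1b hIg] : [/\ (j1, j1) \in Q, le a j1, le j1 b & INC (gen P Q l0) j1 b].
    case: (ltrgt0P n) hn => hn' // _.
      have [h1 h2 h3 h4] := pinc_INC pQ bQ (hinc hn'); split => //.
      by rewrite /gen /l0 /= ltNge (ltW hn').
    have [h1 h2 h3 h4] := pdec_DEC pQ bQ (hdec hn'); split => //.
    by rewrite /gen /l0 /= hn'; apply/(inc_pinv pQ h1 bQ).
  have hCQ' : CH Q a b j1.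
    case: hCQ => s [c1 c2 c3 c4].
    case: (boolP (j1 \in a :: s)) => hjs; first by exists s.
    have hbs : b \in a :: s by rewrite -c2 mem_last.
    have lj1 : lt a j1.
      case/orP: (nlt_eqlt hj1a) => [/eqP e|//]; by move: hjs; rewrite -e mem_head.
    have lj2 : lt j1 b.
      case/orP: (nlt_eqlt hj1b) => [/eqP e|//]; by move: hjs; rewrite -e hbs.
    have [s' [d1 d2 d3 d4]] := @split_chain (Mono Q) (Mono Q) a s b j1 c1 c2 hjs lj1 lj2
      (fun c c' h _ => h) (fun c c' '(And3 m1 m2 m3) h1 h2 _ =>
         conj (And3 m1 jQ (match m3 with or_introl h => or_introl (INC_narrow h (lexx' c) (ltW' h2))
                                        | or_intror h => or_intror (DEC_narrow h (lexx' c) (ltW' h2)) end))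
              (And3 jQ m2 (match m3 with or_introl h => or_introl (INC_narrow h (ltW' h1) (lexx' c'))
                                        | or_intror h => or_intror (DEC_narrow h (ltW' h1) (lexx' c')) end))) c3.
    by exists s'; split => //; rewrite inE d4 orbT.
  have [w' ew'] := tpow_cons v hn.
  have hcs : forall c, Cp p q a b c -> c \in pts p ++ pts q.
    by move=> c hc; have [] := Cp_in pP pQ sP sQ ap bp aq bq hab hc.
  split; first by split.
  rewrite ew ew'; exists j1; split => //; split => //; split => //.
  move=> c hc; have [e he] := iv1 c hc; move: he; rewrite ew ew' => he.
  have ge := weval_unrestr pP pQ he.
  rewrite -ew' -ew in he ge.
  have [hje heb] := hv c e hc he.
  exists e; rewrite -ew' -ew; split => // x hx hax hxb.
  have [c0 [hc0 hmin]] := exists_min hcs hc.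
  have [e0 he0] := iv1 c0 hc0.
  have ge0 := weval_unrestr pP pQ he0.
  have hxe0 : lt x e0.
    apply: (iv2 c0 hc0 hmin e0 he0 x).
    by apply: in_ess => //.
  case/orP: (hmin c hc) => [/eqP ec|hl].
    by move: ge0; rewrite -ec ge => -[->].
  by apply: ltT hxe0 (weval_lt pP pQ ge0 ge hl).
Qed.


Lemma final (p q P Q : pgraph M) (W v : word) (n : int) a b :
  pext P p -> pext Q q ->
  (a, a) \in p -> (b, b) \in p -> (a, a) \in q -> (b, b) \in q ->
  Inv a b (Cp p q a b) W P Q -> reduced W -> n != 0 -> W = tpow n ++ v ->
  elib d lt (restr lt p a b) (restr lt q a b) (restr lt P a b) (restr lt Q a b) W.
Proof.
  move=> sP sQ ap bp aq bq [[pP pQ aP bP [aQ bQ hab]] HI] red hn ew.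
  have [w' ew'] := tpow_cons v hn.
  subst W; rewrite ew' in red |- *.
  move: HI; rewrite ew' => -[j [hCu [hCo [hI Hv]]]].
  set l0 := (true, n < 0) in hCu hCo hI.
  have hab' : le a b := ltW' hab.
  have [jQ _ haj hjb _] := CH_props aQ hCu.
  have uniqv : forall c e, Cp p q a b c ->
      weval ((true, n < 0) :: w') (restr lt P a b) (restr lt Q a b) c = Some e ->
      [/\ lt j e, lt e b & forall x, x \in pts P -> lt a x -> lt x b -> lt x e].
    move=> c e hc he; have := weval_unrestr pP pQ he.
    by have [e' [-> h1 h2 h3]] := Hv c hc => -[<-].
  split; first exact: pi_restr.
  split; first exact: pi_restr.
  split; first exact: pext_restr.
  split; first exact: pext_restr.
  split; first exact: CH_inform pP aP hCo.
  split; first exact: CH_inform pQ aQ hCu.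
  split; first by exists a; split; apply: dmin_restr.
  split; first by exists a; split; apply: dmin_restr.
  split; first by exists b; split; apply: dmax_restr.
  split; first by exists b; split; apply: dmax_restr.
  split => //.
  exists n, v; split => //; split; first by rewrite ew'.
  split.
    move=> c hc; have [e [he _ _ _]] := Hv c hc.
    have [h1 h2 _] := Cp_in pP pQ sP sQ ap bp aq bq hab hc.
    have [h _ _] := weval_restr pP pQ aP bP aQ bQ (ltW' h1) (ltW' h2) he.
    by exists e.
  split.
    move=> c0 hc0 _ e0 h0 x hx.
    have [_ _ H] := uniqv _ _ hc0 h0.
    have [h1 h2 h3] := ess_in pP (fun x h => h) aP bP hab' hx.
    exact: H.
  exists j, b; split; first exact: dmax_restr.
  split; first by move=> c e hc he; have [] := uniqv _ _ hc he.
  split.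
    move=> hn'; apply: INC_pinc => //.
    by move: hI; rewrite /gen /l0 /= ltNge (ltW hn').
  move=> hn'; apply: DEC_pdec => //.
  by move: hI; rewrite /gen /l0 /= hn' => /(inc_pinv pQ jQ bQ).
Qed.

Lemma reduced_tail (l : letter) (W : word) : reduced (l :: W) -> reduced W.
Proof. by rewrite /reduced; case: W => //= l' W /andP []. Qed.

Lemma piece (p q P Q : pgraph M) (w u : word) a b :
  partial_iso d lt P -> partial_iso d lt Q -> pext P p -> pext Q q ->
  (a, a) \in p -> (b, b) \in p -> (a, a) \in q -> (b, b) \in q -> lt a b ->
  elib d lt (restr lt p a b) (restr lt q a b) (restr lt P a b) (restr lt Q a b) w ->
  reduced (u ++ w) -> (u = [::] \/ exists (n : int) (v : word), n != 0 /\ u = tpow n ++ v) ->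
  exists nP nQ, inab a b nP /\ inab a b nQ /\ partial_iso d lt (P ++ nP) /\ partial_iso d lt (Q ++ nQ) /\
    elib d lt (restr lt p a b) (restr lt q a b) (restr lt (P ++ nP) a b) (restr lt (Q ++ nQ) a b) (u ++ w).
Proof.
  move=> pP pQ sP sQ ap bp aq bq hab hel red [->|[n [v [hn eu]]]].
    by exists [::], [::]; rewrite !cats0.
  have I0 := init pP pQ sP sQ ap bp aq bq hab hel.
  have hcs : forall c, Cp p q a b c -> c \in pts p ++ pts q.
    by move=> c hc; have [] := Cp_in pP pQ sP sQ ap bp aq bq hab hc.
  have H : forall u, reduced (u ++ w) -> exists nP nQ, inab a b nP /\ inab a b nQ /\
      Inv a b (Cp p q a b) (u ++ w) (P ++ nP) (Q ++ nQ).
    elim=> [|l u' IH] hr; first by exists [::], [::]; rewrite !cats0.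
    have [nP [nQ [i1 [i2 I1]]]] := IH (reduced_tail hr).
    have [nP' [nQ' [i1' [i2' I2]]]] := step hcs hr I1.
    exists (nP ++ nP'), (nQ ++ nQ'); rewrite !catA; do 2 (split; first exact: inab_cat).
    exact: I2.
  have [nP [nQ [i1 [i2 I1]]]] := H u red.
  exists nP, nQ; do 2 (split => //).
  have [[p1 p2 _ _ _] _] := I1; do 2 (split => //).
  have sP' : pext (P ++ nP) p by move=> x hx; rewrite mem_cat sP.
  have sQ' : pext (Q ++ nQ) q by move=> x hx; rewrite mem_cat sQ.
  apply: (final sP' sQ' ap bp aq bq I1 red hn (v := v ++ w)).
  by rewrite eu catA.
Qed.


Lemma fixb_in (g : pgraph M) x : fixb g x -> (x, x) \in g.
Proof. by move/eqP/papp_in. Qed.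

Lemma consec_disj (p q : pgraph M) a b a' b' x :
  consec_fix lt p q a b -> consec_fix lt p q a' b' ->
  lt a x -> lt x b -> le a' x -> le x b' -> a = a' /\ b = b'.
Proof.
  move=> [fpa [fqa [fpb [fqb [hab H]]]]] [fpa' [fqa' [fpb' [fqb' [hab' H']]]]] h1 h2 h3 h4.
  have ea : a = a'.
    case: (eqVneq a a') => // ne; exfalso.
    case/orP: (lt_tot ne) => h.
      by apply: (H a' fpa' fqa'); split => //; apply: le_ltT h3 h2.
    by apply: (H' a fpa fqa); split => //; apply: lt_leT h1 h4.
  subst a'; split => //.
  case: (eqVneq b b') => // ne; exfalso.
  case/orP: (lt_tot ne) => h.
    by apply: (H' b fpb fqb); split.
  by apply: (H b' fpb' fqb'); split.
Qed.

Lemma filter_nil (T : eqType) (P : pred T) (s : seq T) : (forall x, x \in s -> P x = false) ->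
  [seq x <- s | P x] = [::].
Proof. elim: s => //= x s IH H; rewrite H ?mem_head //; apply: IH => y hy; apply: H.
  by rewrite inE hy orbT. Qed.

Lemma restr_out (g n : pgraph M) a b : (forall pr, pr \in n -> ~~ (le a pr.1 && le pr.1 b)) ->
  restr lt (g ++ n) a b = restr lt g a b.
Proof. move=> H; rewrite /restr filter_cat (@filter_nil _ _ n) ?cats0 //.
  move=> pr hpr; apply/negbTE; rewrite eqlt_le eqlt_le; exact: H. Qed.

Lemma dmin_ext (g n : pgraph M) m : is_dmin lt g m -> (forall pr, pr \in n -> lt m pr.1) -> is_dmin lt (g ++ n) m.
Proof. move=> /andP [hm /allP H] Hn; apply/andP; split; first by rewrite /dom map_cat mem_cat hm.
  apply/allP => x; rewrite /dom map_cat mem_cat => /orP [/H //|/mapP [pr hpr ->]].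
  by rewrite Hn ?orbT. Qed.
Lemma dmax_ext (g n : pgraph M) m : is_dmax lt g m -> (forall pr, pr \in n -> lt pr.1 m) -> is_dmax lt (g ++ n) m.
Proof. move=> /andP [hm /allP H] Hn; apply/andP; split; first by rewrite /dom map_cat mem_cat hm.
  apply/allP => x; rewrite /dom map_cat mem_cat => /orP [/H //|/mapP [pr hpr ->]].
  by rewrite Hn ?orbT. Qed.

Lemma main_p (p q p' q' : pgraph M) (w u : word) :
  liberates_p d lt p q p' q' w -> reduced (u ++ w) ->
  (u = [::] \/ exists (n : int) (v : word), n != 0 /\ u = tpow n ++ v) ->
  exists p'' q'', partial_iso d lt p'' /\ partial_iso d lt q'' /\
    pext p'' p' /\ pext q'' q' /\ liberates_p d lt p q p'' q'' (u ++ w).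
Proof.
  move=> [pp [pq [sp [sq [mp [mq [Mp [Mq Hl]]]]]]]] red hu.
  pose inpc (ps : seq (M * M)) (pr : M * M) :=
    exists a b, [/\ consec_fix lt p q a b, (a, b) \in ps, lt a pr.1 & lt pr.1 b].
  have Claim : forall ps : seq (M * M), exists nP nQ, partial_iso d lt (p' ++ nP) /\ partial_iso d lt (q' ++ nQ) /\
      (forall pr, pr \in nP ++ nQ -> inpc ps pr) /\
      forall a b, consec_fix lt p q a b -> (a, b) \in ps ->
        elib d lt (restr lt p a b) (restr lt q a b) (restr lt (p' ++ nP) a b) (restr lt (q' ++ nQ) a b) (u ++ w).
    elim=> [|[a b] ps [nP [nQ [p1 [p2 [H1 H2]]]]]].
      by exists [::], [::]; rewrite !cats0.
    have out : forall a0 b0 (n : pgraph M), consec_fix lt p q a0 b0 -> (forall pr, pr \in n -> inpc ps pr) -> (a0, b0) \notin ps ->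
        forall pr, pr \in n -> ~~ (le a0 pr.1 && le pr.1 b0).
      move=> a0 b0 n hc Hn hn pr hpr; apply/negP => /andP [h1 h2].
      have [a1 [b1 [hc1 hin h3 h4]]] := Hn _ hpr.
      have [e1 e2] := consec_disj hc1 hc h3 h4 h1 h2; subst a1 b1.
      by move/negP: hn.
    case: (classic (consec_fix lt p q a b /\ (a, b) \notin ps)) => [[hc hn]|hno].
      have [fpa [fqa [fpb [fqb [hab _]]]]] := hc.
      have ap := fixb_in fpa; have aq := fixb_in fqa; have bp := fixb_in fpb; have bq := fixb_in fqb.
      have sP : pext (p' ++ nP) p by move=> x hx; rewrite mem_cat sp.
      have sQ : pext (q' ++ nQ) q by move=> x hx; rewrite mem_cat sq.
      have outP : restr lt (p' ++ nP) a b = restr lt p' a b.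
        by apply: restr_out; apply: (out a b) => // pr hpr; apply: H1; rewrite mem_cat hpr.
      have outQ : restr lt (q' ++ nQ) a b = restr lt q' a b.
        by apply: restr_out; apply: (out a b) => // pr hpr; apply: H1; rewrite mem_cat hpr orbT.
      have hel := Hl a b hc; rewrite -outP -outQ in hel.
      have [nP' [nQ' [i1 [i2 [p1' [p2' hel']]]]]] := piece p1 p2 sP sQ ap bp aq bq hab hel red hu.
      exists (nP ++ nP'), (nQ ++ nQ'); rewrite !catA; do 2 (split => //).
      have inpc_new : forall n : pgraph M, inab a b n -> forall pr, pr \in n -> inpc ((a, b) :: ps) pr.
        move=> n hn' pr hpr; have /and4P [h1 h2 _ _] := hn' _ hpr.
        by exists a, b; rewrite mem_head.
      have inpc_old : forall pr, inpc ps pr -> inpc ((a, b) :: ps) pr.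
        move=> pr [a1 [b1 [h1 h2 h3 h4]]]; exists a1, b1; by rewrite inE h2 orbT.
      split.
        move=> pr; rewrite !mem_cat; case/orP => [/orP [/orP [h|h]|h]|h].
        - by apply: inpc_old; apply: H1; rewrite mem_cat h.
        - exact: inpc_new i1 _ h.
        - by apply: inpc_old; apply: H1; rewrite mem_cat h orbT.
        - exact: inpc_new i2 _ h.
      move=> a0 b0 hc0; rewrite inE => /orP [/eqP [-> ->] //|hin].
      have ne : (a0, b0) != (a, b) by apply: contraNneq hn => -[<- <-].
      have outn : forall n : pgraph M, inab a b n -> forall pr, pr \in n -> ~~ (le a0 pr.1 && le pr.1 b0).
        move=> n hn' pr hpr; apply/negP => /andP [h1 h2]; have /and4P [h3 h4 _ _] := hn' _ hpr.
        have [e1 e2] := consec_disj hc hc0 h3 h4 h1 h2; subst a0 b0.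
        by move: ne; rewrite eqxx.
      rewrite (restr_out _ (outn _ i1)) (restr_out _ (outn _ i2)).
      exact: H2.
    exists nP, nQ; do 2 (split => //).
    split.
      move=> pr hpr; have [a1 [b1 [h1 h2 h3 h4]]] := H1 _ hpr; exists a1, b1; by rewrite inE h2 orbT.
    move=> a0 b0 hc0; rewrite inE => /orP [/eqP [ea eb]|hin]; last exact: H2.
    subst a0 b0; apply: H2 => //.
    by case: (boolP ((a, b) \in ps)) => // hn; exfalso; apply: hno.
  have [nP [nQ [p1 [p2 [H1 H2]]]]] := Claim [seq (x, y) | x <- dom p, y <- dom p].
  exists (p' ++ nP), (q' ++ nQ).
  split; first exact: p1. split; first exact: p2.
  split; first by move=> x hx; rewrite mem_cat hx.
  split; first by move=> x hx; rewrite mem_cat hx.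
  split; first exact: p1. split; first exact: p2.
  have bnd : forall pr, pr \in nP ++ nQ -> exists a b, [/\ (a \in dom p) && (a \in dom q),
      (b \in dom p) && (b \in dom q), lt a pr.1 & lt pr.1 b].
    move=> pr /H1 [a [b [[fpa [fqa [fpb [fqb _]]]] _ h1 h2]]].
    by exists a, b; rewrite (in_dom (fixb_in fpa)) (in_dom (fixb_in fpb)) (in_dom (fixb_in fqa)) (in_dom (fixb_in fqb)).
  split; first by move=> x hx; rewrite mem_cat sp.
  split; first by move=> x hx; rewrite mem_cat sq.
  have minok : forall g n r, (forall x, x \in dom p -> x \in dom q -> x \in dom r) ->
      same_min lt g r -> (forall pr, pr \in n -> pr \in nP ++ nQ) -> same_min lt (g ++ n) r.
    move=> g n r hr [m [hm1 hm2]] hn; exists m; split => //; apply: dmin_ext hm1 _ => pr hpr.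
    have [a [b [/andP [ha1 ha2] _ h1 _]]] := bnd _ (hn _ hpr).
    move/andP: hm2 => [_ /allP /(_ _ (hr _ ha1 ha2))] /orP [/eqP <-//|h]; exact: ltT h h1.
  have maxok : forall g n r, (forall x, x \in dom p -> x \in dom q -> x \in dom r) ->
      same_max lt g r -> (forall pr, pr \in n -> pr \in nP ++ nQ) -> same_max lt (g ++ n) r.
    move=> g n r hr [m [hm1 hm2]] hn; exists m; split => //; apply: dmax_ext hm1 _ => pr hpr.
    have [a [b [_ /andP [hb1 hb2] _ h2]]] := bnd _ (hn _ hpr).
    move/andP: hm2 => [_ /allP /(_ _ (hr _ hb1 hb2))] /orP [/eqP <-//|h]; exact: ltT h2 h.
  have inP : forall pr, pr \in nP -> pr \in nP ++ nQ by move=> pr h; rewrite mem_cat h.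
  have inQ : forall pr, pr \in nQ -> pr \in nP ++ nQ by move=> pr h; rewrite mem_cat h orbT.
  split; first by apply: minok mp inP => x h _.
  split; first by apply: minok mq inQ => x _ h.
  split; first by apply: maxok Mp inP => x h _.
  split; first by apply: maxok Mq inQ => x _ h.
  move=> a b hc; apply: H2 => //.
  have [fpa [_ [fpb _]]] := hc.
  by apply: allpairs_f; apply: in_dom; apply: fixb_in.
Qed.


Lemma reduced_swap (s : word) : reduced (swapw s) = reduced s.
Proof. case: s => [|x s] //=; rewrite /reduced /= path_map; apply: eq_path => y z /=.
  by rewrite (inj_eq negb_inj). Qed.

Lemma swapw_cat (u w : word) : swapw (u ++ w) = swapw u ++ swapw w. Proof. exact: map_cat. Qed.
Lemma swapw_spow (m : int) : swapw (spow m) = tpow m. Proof. by rewrite /swapw /spow /gpow map_nseq. Qed.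

Lemma consec_sym (p q : pgraph M) a b : consec_fix lt p q a b -> consec_fix lt q p a b.
Proof. case=> [h1 [h2 [h3 [h4 [h5 H]]]]]; do 5 (split => //); move=> c hq hp; exact: H. Qed.

Lemma libq_p (p q p' q' : pgraph M) (w : word) :
  liberates_q d lt p q p' q' w -> liberates_p d lt q p q' p' (swapw w).
Proof. case=> [h1 [h2 [h3 [h4 [h5 [h6 [h7 [h8 H]]]]]]]]; do 8 (split => //).
  move=> a b hc; exact: (H a b (consec_sym hc)). Qed.
Lemma libp_q (p q p' q' : pgraph M) (w : word) :
  liberates_p d lt q p q' p' (swapw w) -> liberates_q d lt p q p' q' w.
Proof. case=> [h1 [h2 [h3 [h4 [h5 [h6 [h7 [h8 H]]]]]]]]; do 8 (split => //).
  move=> a b hc; exact: (H a b (consec_sym hc)). Qed.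

End Main.

Theorem lemma5p3 (M : eqType) (d : M -> M -> rat) (lt : rel M)
  (HM : is_QUo d lt) (p q p' q' : seq (M * M)) (w u : word) :
  partial_iso d lt p -> partial_iso d lt q ->
  piecewise_elementary lt p q ->
  reduced u -> reduced (u ++ w) ->
  (liberates_p d lt p q p' q' w ->
     (u = [::] \/ exists (n : int) (v : word), n != 0 /\ u = tpow n ++ v) ->
     exists p'' q'', partial_iso d lt p'' /\ partial_iso d lt q'' /\
       pext p'' p' /\ pext q'' q' /\ liberates_p d lt p q p'' q'' (u ++ w)) /\
  (liberates_q d lt p q p' q' w ->
     (u = [::] \/ exists (m : int) (v : word), m != 0 /\ u = spow m ++ v) ->
     exists p'' q'', partial_iso d lt p'' /\ partial_iso d lt q'' /\
       pext p'' p' /\ pext q'' q' /\ liberates_q d lt p q p'' q'' (u ++ w)).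
Proof.
  move=> _ _ _ _ red; split.
    by move=> hl hu; apply: (main_p HM hl red hu).
  move=> hl hu.
  have hl' := libq_p hl.
  have red' : reduced (swapw u ++ swapw w) by rewrite -swapw_cat reduced_swap.
  have hu' : swapw u = [::] \/ exists (n : int) (v : word), n != 0 /\ swapw u = tpow n ++ v.
    case: hu => [->|[m [v [hm ->]]]]; [by left|right].
    by exists m, (swapw v); rewrite swapw_cat swapw_spow.
  have [q'' [p'' [h1 [h2 [h3 [h4 h5]]]]]] := main_p HM hl' red' hu'.
  exists p'', q''; do 4 (split => //).
  by apply: libp_q; rewrite swapw_cat.
Qed.
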